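(* Let $(\alpha_i^h)\subset W^{-2,2}(0,L)$, $i=1,2,3$, be sequences indexed by $h\to0$, and let $f\in W^{-2,2}(\omega)$ be such that $$\alpha_1^h N+\alpha_2^h\tau_2+\alpha_3^h\tau_3\rightharpoonup f\quad\text{weakly in }W^{-2,2}(\omega).$$ Then there exist $\alpha_i\in W^{-2,2}(0,L)$, $i=1,2,3$, such that $\alpha_i^h\rightharpoonup\alpha_i$ weakly in $W^{-2,2}(0,L)$ for each $i$, and $$f=\alpha_1N+\alpha_2\tau_2+\alpha_3\tau_3.$$ If moreover $f=\partial_s g$ for some $g\in L^2(\omega)$, then $\alpha_i\in L^2(0,L)$ for $i=1,2,3$. If $f=0$, then $\alpha_1=\alpha_2=\alpha_3=0$.
   Context: Let $\gamma:[0,1]\to\mathbb{R}^3$, $\gamma(s)=(0,\gamma_2(s),\gamma_3(s))$, be a simple planar curve of class $C^6$ parametrized by arclength; $\tau:=\dot\gamma$, $n:=(0,-\tau_3,\tau_2)$, $k:=\dot\tau\cdot n$ is the curvature, assumed not identically zero on $[0,1]$; $N:=\gamma\cdot n$, $T:=\gamma\cdot\tau$. Let $\omega=(0,L)\times(0,1)$ with coordinates $(x_1,s)$. An element $\alpha\in W^{-2,2}(0,L)$ is identified with an element of $W^{-2,2}(\omega)$ via $\langle\alpha,\delta\rangle:=\int_0^1\langle\alpha,\delta(s,\cdot)\rangle_{W^{-2,2}(0,L),W^{2,2}_0(0,L)}\,ds$ for $\delta\in C_0^\infty(\omega)$, extended by density to $W^{2,2}_0(\omega)$; for $\beta\in C([0,1])$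 the product $\alpha\beta\in W^{-2,2}(\omega)$ is defined by $\langle\alpha\beta,\delta\rangle:=\langle\alpha,\beta\delta\rangle$. *)

(* Defs.v *)
From Stdlib Require Import Reals Lra Classical ClassicalEpsilon.
Open Scope R_scope.

(** Total Riemann integral (0 if not Riemann integrable). *)
Definition RInt (f : R -> R) (a b : R) : R :=
  epsilon (inhabits 0)
    (fun v => exists pr : Riemann_integrable f a b, RiemannInt pr = v).

(** Derivative (meaningful where f is differentiable). *)
Definition der (f : R -> R) (x : R) : R :=
  epsilon (inhabits 0) (fun l => derivable_pt_lim f x l).

Definition smooth1 (f : R -> R) : Prop :=
  exists D : nat -> R -> R, D 0%nat = f /\
    forall k x, derivable_pt_lim (D k) x (D (S k) x).

Definition test1 (L : R) (phi : R -> R) : Prop :=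
  smooth1 phi /\
  exists a b, 0 < a /\ a < b /\ b < L /\
    forall x, (x < a \/ b < x) -> phi x = 0.

Definition H2norm1 (L : R) (phi : R -> R) : R :=
  sqrt (RInt (fun x => phi x ^ 2 + der phi x ^ 2 + der (der phi) x ^ 2) 0 L).

Definition L2norm1 (L : R) (phi : R -> R) : R :=
  sqrt (RInt (fun x => phi x ^ 2) 0 L).

(** alpha in W^{-2,2}(0,L): bounded linear functional on C_c^infty(0,L)
    for the W^{2,2} norm (hence uniquely extended to W^{2,2}_0(0,L)). *)
Definition Wm22_1 (L : R) (alpha : (R -> R) -> R) : Prop :=
  (forall phi psi c, test1 L phi -> test1 L psi ->
     alpha (fun x => c * phi x + psi x) = c * alpha phi + alpha psi) /\
  exists C, forall phi, test1 L phi -> Rabs (alpha phi) <= C * H2norm1 L phi.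

(** alpha in L^2(0,L) (as a distribution): bounded for the L^2 norm. *)
Definition L2dist1 (L : R) (alpha : (R -> R) -> R) : Prop :=
  exists C, forall phi, test1 L phi -> Rabs (alpha phi) <= C * L2norm1 L phi.

(** Elements of W^{2,2}_0(0,L), represented by W^{2,2}-Cauchy sequences of
    test functions (W^{2,2}_0 is the completion of C_c^infty). *)
Definition W22_0_1 (L : R) (Phi : nat -> R -> R) : Prop :=
  (forall n, test1 L (Phi n)) /\
  forall eps, 0 < eps -> exists N, forall m n, (N <= m)%nat -> (N <= n)%nat ->
    H2norm1 L (fun x => Phi m x - Phi n x) < eps.

(** Weak convergence in W^{-2,2}(0,L): <As h, delta> -> <A, delta> for every
    delta in W^{2,2}_0, the pairing being the limit along an approximating
    Cauchy sequence of test functions. *)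
Definition weak_cv1 (L : R) (As : nat -> (R -> R) -> R) (A : (R -> R) -> R) : Prop :=
  forall Phi, W22_0_1 L Phi ->
  forall (vs : nat -> R) (v : R),
    (forall h, Un_cv (fun n => As h (Phi n)) (vs h)) ->
    Un_cv (fun n => A (Phi n)) v ->
    Un_cv vs v.

Definition jcont (F : R -> R -> R) : Prop :=
  forall x s eps, 0 < eps -> exists d, 0 < d /\
    forall y t, Rabs (y - x) < d -> Rabs (t - s) < d -> Rabs (F y t - F x s) < eps.

Definition smooth2 (f : R -> R -> R) : Prop :=
  exists D : nat -> nat -> R -> R -> R, D 0%nat 0%nat = f /\
    (forall i j, jcont (D i j)) /\
    forall i j x s,
      derivable_pt_lim (fun y => D i j y s) x (D (S i) j x s) /\
      derivable_pt_lim (fun t => D i j x t) s (D i (S j) x s).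

Definition test2 (L : R) (d : R -> R -> R) : Prop :=
  smooth2 d /\
  exists a b c e, 0 < a /\ a < b /\ b < L /\ 0 < c /\ c < e /\ e < 1 /\
    forall x s, (x < a \/ b < x \/ s < c \/ e < s) -> d x s = 0.

Definition Int2 (L : R) (F : R -> R -> R) : R :=
  RInt (fun s => RInt (fun x => F x s) 0 L) 0 1.

Definition dx (d : R -> R -> R) : R -> R -> R := fun x s => der (fun y => d y s) x.
Definition ds (d : R -> R -> R) : R -> R -> R := fun x s => der (fun t => d x t) s.

Definition H2norm2 (L : R) (d : R -> R -> R) : R :=
  sqrt (Int2 L (fun x s => d x s ^ 2 + dx d x s ^ 2 + ds d x s ^ 2
      + dx (dx d) x s ^ 2 + dx (ds d) x s ^ 2 + ds (ds d) x s ^ 2)).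

Definition L2norm2 (L : R) (d : R -> R -> R) : R :=
  sqrt (Int2 L (fun x s => d x s ^ 2)).

Definition Wm22_2 (L : R) (F : (R -> R -> R) -> R) : Prop :=
  (forall d e c, test2 L d -> test2 L e ->
     F (fun x s => c * d x s + e x s) = c * F d + F e) /\
  exists C, forall d, test2 L d -> Rabs (F d) <= C * H2norm2 L d.

(** g in L^2(omega), represented (Riesz) by the bounded linear functional
    delta |-> int g delta on test functions. *)
Definition L2fun2 (L : R) (G : (R -> R -> R) -> R) : Prop :=
  (forall d e c, test2 L d -> test2 L e ->
     G (fun x s => c * d x s + e x s) = c * G d + G e) /\
  exists C, forall d, test2 L d -> Rabs (G d) <= C * L2norm2 L d.

Definition W22_0_2 (L : R) (Phi : nat -> R -> R -> R) : Prop :=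
  (forall n, test2 L (Phi n)) /\
  forall eps, 0 < eps -> exists N, forall m n, (N <= m)%nat -> (N <= n)%nat ->
    H2norm2 L (fun x s => Phi m x s - Phi n x s) < eps.

Definition weak_cv2 (L : R) (Fs : nat -> (R -> R -> R) -> R) (F : (R -> R -> R) -> R) : Prop :=
  forall Phi, W22_0_2 L Phi ->
  forall (vs : nat -> R) (v : R),
    (forall h, Un_cv (fun n => Fs h (Phi n)) (vs h)) ->
    Un_cv (fun n => F (Phi n)) v ->
    Un_cv vs v.

(** The element alpha * beta of W^{-2,2}(omega), for alpha in W^{-2,2}(0,L),
    beta in C([0,1]):  <alpha beta, delta> = int_0^1 beta(s) <alpha, delta(.,s)> ds. *)
Definition embed (alpha : (R -> R) -> R) (beta : R -> R) : (R -> R -> R) -> R :=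
  fun d => RInt (fun s => beta s * alpha (fun x => d x s)) 0 1.

Definition I01 (x : R) : Prop := 0 <= x <= 1.

Definition deriv_within01 (f : R -> R) (x l : R) : Prop :=
  forall eps, 0 < eps -> exists d, 0 < d /\
    forall y, I01 y -> y <> x -> Rabs (y - x) < d ->
      Rabs ((f y - f x) / (y - x) - l) < eps.

Definition cont_within01 (f : R -> R) (x : R) : Prop :=
  forall eps, 0 < eps -> exists d, 0 < d /\
    forall y, I01 y -> Rabs (y - x) < d -> Rabs (f y - f x) < eps.

Definition C6_01 (D : nat -> R -> R) : Prop :=
  (forall k x, (k < 6)%nat -> I01 x -> deriv_within01 (D k) x (D (S k) x)) /\
  (forall x, I01 x -> cont_within01 (D 6%nat) x).

(** gamma = (0, g2 0, g3 0), tau = (0, g2 1, g3 1), n = (0, -tau3, tau2). *)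
Definition tau2 (g2 : nat -> R -> R) : R -> R := g2 1%nat.
Definition tau3 (g3 : nat -> R -> R) : R -> R := g3 1%nat.
Definition curvature (g2 g3 : nat -> R -> R) (s : R) : R :=
  g2 2%nat s * (- g3 1%nat s) + g3 2%nat s * g2 1%nat s.
Definition Nfun (g2 g3 : nat -> R -> R) (s : R) : R :=
  g2 0%nat s * (- g3 1%nat s) + g3 0%nat s * g2 1%nat s.

Definition admissible_curve (g2 g3 : nat -> R -> R) : Prop :=
  C6_01 g2 /\ C6_01 g3 /\
  (forall s, I01 s -> g2 1%nat s ^ 2 + g3 1%nat s ^ 2 = 1) /\
  (forall s t, I01 s -> I01 t -> g2 0%nat s = g2 0%nat t -> g3 0%nat s = g3 0%nat t -> s = t) /\
  (exists s, I01 s /\ curvature g2 g3 s <> 0).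

(* Main.v *)
Require Import Defs.
From Stdlib Require Import Reals Lra Lia Classical ClassicalEpsilon FunctionalExtensionality List.
From Coquelicot Require Import Coquelicot.
Open Scope R_scope.

Lemma DRInt_eq f a b : ex_RInt f a b -> Defs.RInt f a b = RInt f a b.
Proof.
  intro H. unfold Defs.RInt.
  destruct (epsilon_spec (inhabits 0) (fun v => exists pr : Riemann_integrable f a b, RiemannInt pr = v)) as [pr Hpr].
  - exists (RiemannInt (ex_RInt_Reals_0 _ _ _ H)). eauto.
  - rewrite <- Hpr. symmetry. apply RInt_Reals.
Qed.

Lemma der_eq f x l : derivable_pt_lim f x l -> der f x = l.
Proof. intro H. unfold der.
  assert (Hs := epsilon_spec (inhabits 0) (fun l => derivable_pt_lim f x l) (ex_intro _ l H)).
  eapply uniqueness_limite; eauto. Qed.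

Lemma der_fun f g : (forall x, derivable_pt_lim f x (g x)) -> der f = g.
Proof. intro H. apply functional_extensionality. intro x. apply der_eq. auto. Qed.

Definition chain1 (D : nat -> R -> R) := forall k x, derivable_pt_lim (D k) x (D (S k) x).

Lemma chain1_cont D k x : chain1 D -> continuous (D k) x.
Proof. intro H. apply continuity_pt_filterlim.
  apply derivable_continuous_pt. exists (D (S k) x). apply H. Qed.

Lemma chain1_shift D : chain1 D -> chain1 (fun k => D (S k)).
Proof. intros H k x. apply H. Qed.

Definition supp1 (L : R) (phi : R -> R) := exists a b, 0 < a /\ a < b /\ b < L /\
    forall x, (x < a \/ b < x) -> phi x = 0.

Lemma test1_intro L phi D : D 0%nat = phi -> chain1 D -> supp1 L phi -> test1 L phi.
Proof. intros H0 H1 H2. split; [exists D; split; auto | exact H2]. Qed.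

Lemma test1_chain L phi : test1 L phi -> exists D, D 0%nat = phi /\ chain1 D /\ supp1 L phi.
Proof. intros [[D [H0 H1]] H2]. exists D; repeat split; auto. Qed.

Lemma supp1_lin L c phi psi : supp1 L phi -> supp1 L psi -> supp1 L (fun x => c * phi x + psi x).
Proof.
  intros [a1 [b1 [h1 [h2 [h3 h4]]]]] [a2 [b2 [k1 [k2 [k3 k4]]]]].
  exists (Rmin a1 a2), (Rmax b1 b2).
  assert (Rmin a1 a2 <= a1) by apply Rmin_l. assert (Rmin a1 a2 <= a2) by apply Rmin_r.
  assert (b1 <= Rmax b1 b2) by apply Rmax_l. assert (b2 <= Rmax b1 b2) by apply Rmax_r.
  repeat split.
  - apply Rmin_case; lra.
  - lra.
  - apply Rmax_case; lra.
  - intros x Hx. rewrite h4 by lra. rewrite k4 by lra. ring.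
Qed.

Lemma chain1_lin c D E : chain1 D -> chain1 E -> chain1 (fun k x => c * D k x + E k x).
Proof. intros HD HE k x.
  apply (derivable_pt_lim_plus (fun x => c * D k x) (E k)); [|apply HE].
  apply (derivable_pt_lim_scal (D k)). apply HD. Qed.

Lemma test1_lin L c phi psi : test1 L phi -> test1 L psi -> test1 L (fun x => c * phi x + psi x).
Proof.
  intros Hp Hq. destruct (test1_chain _ _ Hp) as [D [D0 [D1 D2]]].
  destruct (test1_chain _ _ Hq) as [E [E0 [E1 E2]]].
  apply (test1_intro L _ (fun k x => c * D k x + E k x)).
  - rewrite D0, E0. reflexivity.
  - apply chain1_lin; auto.
  - apply supp1_lin; auto.
Qed.

Lemma chain1_zero : chain1 (fun _ _ => 0).
Proof. intros k x. apply derivable_pt_lim_const. Qed.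

Lemma test1_zero L : 0 < L -> test1 L (fun _ => 0).
Proof. intro HL. apply (test1_intro L _ (fun _ _ => 0)); auto using chain1_zero.
  exists (L/3), (2*L/3). repeat split; try lra. Qed.


Lemma exR (f : R -> R) a b : (forall z, Rmin a b <= z <= Rmax a b -> continuity_pt f z) -> ex_RInt f a b.
Proof. intro H. apply (ex_RInt_continuous (V:=R_CompleteNormedModule)). intros z Hz. apply continuity_pt_filterlim. auto. Qed.
Lemma RInt_constR (c a b : R) : RInt (fun _ => c) a b = (b-a)*c.
Proof. rewrite RInt_const. reflexivity. Qed.
Lemma RInt_plusR (f g : R -> R) a b : ex_RInt f a b -> ex_RInt g a b -> RInt (fun x => f x + g x) a b = RInt f a b + RInt g a b.
Proof. intros. apply (RInt_plus (V:=R_CompleteNormedModule)); auto. Qed.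
Lemma RInt_scalR (f : R -> R) a b l : ex_RInt f a b -> RInt (fun x => l * f x) a b = l * RInt f a b.
Proof. intros. apply (RInt_scal (V:=R_CompleteNormedModule)); auto. Qed.
Lemma RInt_minusR (f g : R -> R) a b : ex_RInt f a b -> ex_RInt g a b -> RInt (fun x => f x - g x) a b = RInt f a b - RInt g a b.
Proof. intros. apply (RInt_minus (V:=R_CompleteNormedModule)); auto. Qed.
Lemma RInt_ChaslesR (f : R -> R) a b c : ex_RInt f a b -> ex_RInt f b c -> RInt f a b + RInt f b c = RInt f a c.
Proof. intros. apply (RInt_Chasles (V:=R_CompleteNormedModule)); auto. Qed.
Lemma RInt_extR (f g : R -> R) a b : (forall x, Rmin a b < x < Rmax a b -> f x = g x) -> RInt f a b = RInt g a b.
Proof. intros. apply (RInt_ext (V:=R_CompleteNormedModule)); auto. Qed.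
Lemma ex_RInt_extR (f g : R -> R) a b : (forall x, Rmin a b < x < Rmax a b -> f x = g x) -> ex_RInt f a b -> ex_RInt g a b.
Proof. intros. apply (ex_RInt_ext (V:=R_NormedModule)) with f; auto. Qed.
Lemma RInt_pointR (f : R -> R) a : RInt f a a = 0.
Proof. apply (RInt_point (V:=R_CompleteNormedModule)). Qed.

Lemma cp_plus f g x : continuity_pt f x -> continuity_pt g x -> continuity_pt (fun y => f y + g y) x.
Proof. apply continuity_pt_plus. Qed.
Lemma cp_minus f g x : continuity_pt f x -> continuity_pt g x -> continuity_pt (fun y => f y - g y) x.
Proof. apply continuity_pt_minus. Qed.
Lemma cp_mult f g x : continuity_pt f x -> continuity_pt g x -> continuity_pt (fun y => f y * g y) x.
Proof. apply continuity_pt_mult. Qed.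
Lemma cp_opp f x : continuity_pt f x -> continuity_pt (fun y => - f y) x.
Proof. apply continuity_pt_opp. Qed.
Lemma cp_const c x : continuity_pt (fun _ => c) x.
Proof. apply continuity_pt_const. intros a b. reflexivity. Qed.
Lemma cp_id x : continuity_pt (fun y => y) x.
Proof. apply derivable_continuous_pt. apply derivable_pt_id. Qed.
Lemma cp_pow2 f x : continuity_pt f x -> continuity_pt (fun y => f y ^ 2) x.
Proof. intro H. apply (continuity_pt_ext (fun y => f y * (f y * 1))). intro; simpl; ring.
  apply cp_mult; auto. apply cp_mult; auto. apply cp_const. Qed.

Lemma chain1_cp D k x : chain1 D -> continuity_pt (D k) x.
Proof. intro H. apply derivable_continuous_pt. exists (D (S k) x). apply H. Qed.

Ltac cpt := repeat first [ apply cp_plus | apply cp_minus | apply cp_pow2 | apply cp_mult | apply cp_opp | apply cp_const | apply cp_id ].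

Lemma absle y M : Rabs y <= M -> -M <= y <= M.
Proof. unfold Rabs; destruct (Rcase_abs y); lra. Qed.
Lemma absle2 y M : -M <= y <= M -> Rabs y <= M.
Proof. unfold Rabs; destruct (Rcase_abs y); lra. Qed.

Lemma H2norm1_bound L phi D M : 0 < L -> D 0%nat = phi -> chain1 D ->
  (forall k x, (k <= 2)%nat -> 0 <= x <= L -> Rabs (D k x) <= M) ->
  H2norm1 L phi <= sqrt (3 * L) * M.
Proof.
  intros HL H0 HD HM.
  assert (M0 : 0 <= M). { apply Rle_trans with (Rabs (D 0%nat 0)). apply Rabs_pos. apply HM; lia || lra. }
  assert (E1 : der phi = D 1%nat). { subst phi. apply der_fun. apply HD. }
  assert (E2 : der (D 1%nat) = D 2%nat). { apply der_fun. apply HD. }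
  unfold H2norm1. rewrite E1, E2.
  assert (Hex : ex_RInt (fun x => phi x ^ 2 + D 1%nat x ^ 2 + D 2%nat x ^ 2) 0 L).
  { apply exR. intros z _. subst phi. cpt; apply chain1_cp; auto. }
  rewrite DRInt_eq by auto.
  assert (Hle : RInt (fun x => phi x ^ 2 + D 1%nat x ^ 2 + D 2%nat x ^ 2) 0 L <= RInt (fun _ => 3 * M^2) 0 L).
  { apply RInt_le; auto. lra. apply exR; intros; apply cp_const.
    intros x Hx. subst phi.
    assert (A0 := absle _ _ (HM 0%nat x ltac:(lia) ltac:(lra))).
    assert (A1 := absle _ _ (HM 1%nat x ltac:(lia) ltac:(lra))).
    assert (A2 := absle _ _ (HM 2%nat x ltac:(lia) ltac:(lra))).
    nra. }
  rewrite RInt_constR in Hle.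
  apply Rle_trans with (sqrt (3 * L * M ^ 2)).
  - apply sqrt_le_1_alt. lra.
  - rewrite sqrt_mult_alt by lra. rewrite sqrt_pow2 by lra. lra.
Qed.

Section W1.
Variable L : R.
Hypothesis HL : 0 < L.
Variable a : (R -> R) -> R.
Hypothesis Ha : Wm22_1 L a.

Lemma W_lin phi psi c : test1 L phi -> test1 L psi -> a (fun x => c*phi x + psi x) = c * a phi + a psi.
Proof. destruct Ha as [H _]. apply H. Qed.

Lemma W_zero : a (fun _ => 0) = 0.
Proof. assert (H := W_lin (fun _ => 0) (fun _ => 0) 1 (test1_zero L HL) (test1_zero L HL)). cbv beta in H.
  replace (fun x : R => 1 * 0 + 0) with (fun _ : R => 0) in H. lra.
  apply functional_extensionality; intro; ring. Qed.

Lemma W_scal phi c : test1 L phi -> a (fun x => c * phi x) = c * a phi.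
Proof. intro Hp. assert (H := W_lin phi (fun _ => 0) c Hp (test1_zero L HL)). cbv beta in H.
  rewrite W_zero in H. replace (fun x : R => c * phi x + 0) with (fun x => c * phi x) in H. lra.
  apply functional_extensionality; intro; ring. Qed.

Lemma W_sub phi psi : test1 L phi -> test1 L psi -> a (fun x => phi x - psi x) = a phi - a psi.
Proof. intros Hp Hq. assert (H := W_lin psi phi (-1) Hq Hp). cbv beta in H.
  replace (fun x : R => -1 * psi x + phi x) with (fun x => phi x - psi x) in H. lra.
  apply functional_extensionality; intro; ring. Qed.

Lemma W_bnd : exists C, 0 <= C /\ forall phi, test1 L phi -> Rabs (a phi) <= C * H2norm1 L phi.
Proof. destruct Ha as [_ [C HC]]. exists (Rmax C 0). split. apply Rmax_r.
  intros phi Hp. apply Rle_trans with (C * H2norm1 L phi). auto.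
  apply Rmult_le_compat_r. apply sqrt_pos. apply Rmax_l. Qed.

Lemma W_cauchy Phi : W22_0_1 L Phi -> exists l, Un_cv (fun n => a (Phi n)) l.
Proof. intros [HT HC]. assert (Hcc : Cauchy_crit (fun n => a (Phi n))). 2:{ destruct (Rcomplete.R_complete _ Hcc) as [l Hl]. exists l; exact Hl. } intros eps Heps.
  destruct W_bnd as [C [C0 HCb]].
  destruct (HC (eps / (C+1))) as [N HN]. apply Rdiv_lt_0_compat; lra.
  exists N. intros n m Hn Hm. unfold R_dist. rewrite <- W_sub by auto.
  eapply Rle_lt_trans. apply HCb.
  replace (fun x => Phi n x - Phi m x) with (fun x => -1 * Phi m x + Phi n x). apply (test1_lin L (-1)); auto.
  apply functional_extensionality; intro; ring.
  specialize (HN n m Hn Hm).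
  apply Rle_lt_trans with (C * (eps / (C+1))). apply Rmult_le_compat_l; lra.
  apply Rlt_le_trans with ((C+1) * (eps/(C+1))). apply Rmult_lt_compat_r. apply Rdiv_lt_0_compat; lra. lra.
  right. field. lra.
Qed.
End W1.

Lemma dpl_ext f g x l : (forall y, f y = g y) -> derivable_pt_lim f x l -> derivable_pt_lim g x l.
Proof. intros H. replace g with f. auto. apply functional_extensionality; auto. Qed.
Lemma dpl_eq f x l l' : derivable_pt_lim f x l -> l = l' -> derivable_pt_lim f x l'.
Proof. intros H <-; auto. Qed.
Lemma dpl_mult f g x lf lg : derivable_pt_lim f x lf -> derivable_pt_lim g x lg ->
  derivable_pt_lim (fun y => f y * g y) x (lf * g x + f x * lg).
Proof. apply derivable_pt_lim_mult. Qed.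
Lemma dpl_plus f g x lf lg : derivable_pt_lim f x lf -> derivable_pt_lim g x lg ->
  derivable_pt_lim (fun y => f y + g y) x (lf + lg).
Proof. apply derivable_pt_lim_plus. Qed.
Lemma dpl_minus f g x lf lg : derivable_pt_lim f x lf -> derivable_pt_lim g x lg ->
  derivable_pt_lim (fun y => f y - g y) x (lf - lg).
Proof. apply derivable_pt_lim_minus. Qed.
Lemma dpl_const c x : derivable_pt_lim (fun _ => c) x 0.
Proof. apply derivable_pt_lim_const. Qed.
Lemma dpl_id x : derivable_pt_lim (fun y => y) x 1.
Proof. apply derivable_pt_lim_id. Qed.
Lemma dpl_scal c f x l : derivable_pt_lim f x l -> derivable_pt_lim (fun y => c * f y) x (c * l).
Proof. intro H. apply (derivable_pt_lim_scal f c x l H). Qed.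
Lemma dpl_scalr c f x l : derivable_pt_lim f x l -> derivable_pt_lim (fun y => f y * c) x (l * c).
Proof. intro H.
  replace (l * c) with (c * l) by ring. apply (dpl_ext (fun y => c * f y)). intro; ring. apply dpl_scal; auto. Qed.

Lemma test1_scal L c phi : 0 < L -> test1 L phi -> test1 L (fun x => c * phi x).
Proof. intros HL H. replace (fun x => c * phi x) with (fun x => c * phi x + 0).
  apply test1_lin; auto. apply test1_zero; auto.
  apply functional_extensionality; intro; ring. Qed.

Lemma jcont_2d F : jcont F <-> forall x s, continuity_2d_pt F x s.
Proof. split.
  - intros H x s eps. destruct (H x s eps (cond_pos eps)) as [d [d0 Hd]].
    exists (mkposreal d d0). intros u v Hu Hv. apply Hd; auto.
  - intros H x s eps He. destruct (H x s (mkposreal eps He)) as [d Hd].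
    exists d. split. apply cond_pos. intros y t Hy Ht. apply Hd; auto.
Qed.

Lemma c2_fst f x s : continuity_pt f x -> continuity_2d_pt (fun u v => f u) x s.
Proof. intro H. apply (continuity_1d_2d_pt_comp f (fun u v => u)). auto. apply continuity_2d_pt_id1. Qed.
Lemma c2_snd f x s : continuity_pt f s -> continuity_2d_pt (fun u v => f v) x s.
Proof. intro H. apply (continuity_1d_2d_pt_comp f (fun u v => v)). auto. apply continuity_2d_pt_id2. Qed.

Definition tens (phi chi : R -> R) : R -> R -> R := fun x s => phi x * chi s.

Lemma test2_tens L phi chi : test1 L phi -> test1 1 chi -> test2 L (tens phi chi).
Proof.
  intros Hp Hc. destruct (test1_chain _ _ Hp) as [D [D0 [D1 [a [b [h1 [h2 [h3 h4]]]]]]]].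
  destruct (test1_chain _ _ Hc) as [E [E0 [E1 [c [e [k1 [k2 [k3 k4]]]]]]]].
  split.
  - exists (fun i j x s => D i x * E j s). repeat split.
    + rewrite D0, E0. reflexivity.
    + intros i j. apply jcont_2d. intros x s. apply continuity_2d_pt_mult.
      apply c2_fst, chain1_cp; auto. apply c2_snd, chain1_cp; auto.
    + apply (dpl_scalr (E j s) (D i)). apply D1.
    + apply (dpl_scal (D i x) (E j)). apply E1.
  - exists a, b, c, e. repeat split; auto.
    intros x s H. unfold tens. destruct H as [H|[H|[H|H]]].
    rewrite h4 by auto; ring. rewrite h4 by auto; ring. rewrite k4 by auto; ring. rewrite k4 by auto; ring.
Qed.

Lemma dx_tens phi chi D : chain1 D -> D 0%nat = phi -> dx (tens phi chi) = tens (D 1%nat) chi.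
Proof. intros HD H0. unfold dx, tens. apply functional_extensionality; intro x.
  apply functional_extensionality; intro s. apply der_eq. subst phi.
  apply (dpl_scalr (chi s) (D 0%nat)). apply HD. Qed.

Lemma ds_tens phi chi E : chain1 E -> E 0%nat = chi -> ds (tens phi chi) = tens phi (E 1%nat).
Proof. intros HE H0. unfold ds, tens. apply functional_extensionality; intro x.
  apply functional_extensionality; intro s. apply der_eq. subst chi.
  apply (dpl_scal (phi x) (E 0%nat)). apply HE. Qed.

Lemma H2norm1_eq L phi D : D 0%nat = phi -> chain1 D ->
  H2norm1 L phi = sqrt (RInt (fun x => D 0%nat x ^ 2) 0 L + RInt (fun x => D 1%nat x ^ 2) 0 L + RInt (fun x => D 2%nat x ^ 2) 0 L).
Proof.
  intros H0 HD.
  assert (E1 : der phi = D 1%nat). { subst phi. apply der_fun. apply HD. }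
  assert (E2 : der (D 1%nat) = D 2%nat). { apply der_fun. apply HD. }
  unfold H2norm1. rewrite E1, E2. subst phi.
  rewrite DRInt_eq by (apply exR; intros; cpt; apply chain1_cp; auto).
  rewrite RInt_plusR by (apply exR; intros; cpt; apply chain1_cp; auto).
  rewrite RInt_plusR by (apply exR; intros; cpt; apply chain1_cp; auto).
  reflexivity.
Qed.

Lemma L2norm1_eq L phi : (forall x, continuity_pt phi x) ->
  L2norm1 L phi = sqrt (RInt (fun x => phi x ^ 2) 0 L).
Proof. intro H. unfold L2norm1. rewrite DRInt_eq by (apply exR; intros; cpt; auto). reflexivity. Qed.

Lemma RInt_sq_ge0 (f : R -> R) a b : a <= b -> (forall x, continuity_pt f x) -> 0 <= RInt (fun x => f x ^ 2) a b.
Proof. intros Hab H. apply RInt_ge_0; auto. apply exR; intros; cpt; auto. intros; nra. Qed.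

Lemma RInt_sep (u : R -> R) (c : R) a b : (forall x, continuity_pt u x) ->
  RInt (fun x => u x * c) a b = c * RInt u a b.
Proof. intro H. rewrite <- RInt_scalR by (apply exR; auto).
  apply RInt_extR. intros; ring. Qed.

Ltac exr_auto := apply exR; intros; cpt; try (apply chain1_cp; auto).

Lemma H2norm2_tens L phi chi D E : D 0%nat = phi -> chain1 D -> E 0%nat = chi -> chain1 E ->
  H2norm2 L (tens phi chi) = sqrt (
    RInt (fun x => D 0%nat x ^ 2) 0 L * RInt (fun s => E 0%nat s ^ 2) 0 1 +
    RInt (fun x => D 1%nat x ^ 2) 0 L * RInt (fun s => E 0%nat s ^ 2) 0 1 +
    RInt (fun x => D 0%nat x ^ 2) 0 L * RInt (fun s => E 1%nat s ^ 2) 0 1 +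
    RInt (fun x => D 2%nat x ^ 2) 0 L * RInt (fun s => E 0%nat s ^ 2) 0 1 +
    RInt (fun x => D 1%nat x ^ 2) 0 L * RInt (fun s => E 1%nat s ^ 2) 0 1 +
    RInt (fun x => D 0%nat x ^ 2) 0 L * RInt (fun s => E 2%nat s ^ 2) 0 1).
Proof.
  intros D0 HD E0 HE. unfold H2norm2.
  rewrite (dx_tens _ _ D HD D0). rewrite (ds_tens _ _ E HE E0).
  rewrite (dx_tens _ _ (fun k => D (S k)) (chain1_shift D HD) eq_refl).
  rewrite (dx_tens _ _ D HD D0).
  rewrite (ds_tens _ _ (fun k => E (S k)) (chain1_shift E HE) eq_refl).
  f_equal. unfold Int2, tens. subst phi chi.
  set (P i := RInt (fun x => D i x ^ 2) 0 L).
  set (SS j := RInt (fun s => E j s ^ 2) 0 1).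
  replace (fun s => Defs.RInt (fun x => (D 0%nat x * E 0%nat s) ^ 2 + (D 1%nat x * E 0%nat s) ^ 2 + (D 0%nat x * E 1%nat s) ^ 2 +
     (D 2%nat x * E 0%nat s) ^ 2 + (D 1%nat x * E 1%nat s) ^ 2 + (D 0%nat x * E 2%nat s) ^ 2) 0 L)
   with (fun s => E 0%nat s ^ 2 * P 0%nat + E 0%nat s ^ 2 * P 1%nat + E 1%nat s ^ 2 * P 0%nat + E 0%nat s ^ 2 * P 2%nat
                + E 1%nat s ^ 2 * P 1%nat + E 2%nat s ^ 2 * P 0%nat).
  2:{ apply functional_extensionality; intro s.
      rewrite DRInt_eq by exr_auto.
      rewrite (RInt_extR _ (fun x => D 0%nat x ^ 2 * E 0%nat s ^ 2 + D 1%nat x ^ 2 * E 0%nat s ^ 2 + D 0%nat x ^ 2 * E 1%nat s ^ 2 +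
           D 2%nat x ^ 2 * E 0%nat s ^ 2 + D 1%nat x ^ 2 * E 1%nat s ^ 2 + D 0%nat x ^ 2 * E 2%nat s ^ 2)) by (intros; ring).
      repeat (rewrite RInt_plusR by exr_auto).
      repeat (rewrite RInt_sep by (intros; cpt; apply chain1_cp; auto)).
      unfold P; ring. }
  rewrite DRInt_eq by exr_auto.
  repeat (rewrite RInt_plusR by exr_auto).
  repeat (rewrite RInt_sep by (intros; cpt; apply chain1_cp; auto)).
  unfold P; reflexivity.
Qed.

Lemma H2norm2_tens_bound L phi chi : 0 < L -> test1 L phi -> test1 1 chi ->
  H2norm2 L (tens phi chi) <= H2norm1 1 chi * H2norm1 L phi.
Proof.
  intros HL Hp Hc. destruct (test1_chain _ _ Hp) as [D [D0 [HD _]]].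
  destruct (test1_chain _ _ Hc) as [E [E0 [HE _]]].
  rewrite (H2norm2_tens L phi chi D E D0 HD E0 HE).
  rewrite (H2norm1_eq 1 chi E E0 HE). rewrite (H2norm1_eq L phi D D0 HD).
  rewrite <- sqrt_mult_alt.
  2:{ assert (H0 := RInt_sq_ge0 (E 0%nat) 0 1 ltac:(lra) (fun x => chain1_cp E 0 x HE)).
      assert (H1 := RInt_sq_ge0 (E 1%nat) 0 1 ltac:(lra) (fun x => chain1_cp E 1 x HE)).
      assert (H2 := RInt_sq_ge0 (E 2%nat) 0 1 ltac:(lra) (fun x => chain1_cp E 2 x HE)). lra. }
  apply sqrt_le_1_alt.
  assert (H0 := RInt_sq_ge0 (E 0%nat) 0 1 ltac:(lra) (fun x => chain1_cp E 0 x HE)).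
  assert (H1 := RInt_sq_ge0 (E 1%nat) 0 1 ltac:(lra) (fun x => chain1_cp E 1 x HE)).
  assert (H2 := RInt_sq_ge0 (E 2%nat) 0 1 ltac:(lra) (fun x => chain1_cp E 2 x HE)).
  assert (G0 := RInt_sq_ge0 (D 0%nat) 0 L ltac:(lra) (fun x => chain1_cp D 0 x HD)).
  assert (G1 := RInt_sq_ge0 (D 1%nat) 0 L ltac:(lra) (fun x => chain1_cp D 1 x HD)).
  assert (G2 := RInt_sq_ge0 (D 2%nat) 0 L ltac:(lra) (fun x => chain1_cp D 2 x HD)).
  nra.
Qed.

Lemma L2norm2_tens L phi chi : 0 < L -> (forall x, continuity_pt phi x) -> (forall x, continuity_pt chi x) ->
  L2norm2 L (tens phi chi) = L2norm1 L phi * L2norm1 1 chi.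
Proof.
  intros HL Hp Hc. rewrite L2norm1_eq by auto. rewrite L2norm1_eq by auto.
  rewrite <- sqrt_mult_alt by (apply RInt_sq_ge0; auto; lra).
  unfold L2norm2, Int2, tens. f_equal.
  replace (fun s => Defs.RInt (fun x => (phi x * chi s) ^ 2) 0 L) with (fun s => chi s ^ 2 * RInt (fun x => phi x ^ 2) 0 L).
  2:{ apply functional_extensionality; intro s. rewrite DRInt_eq by (apply exR; intros; cpt; auto).
      rewrite <- RInt_sep by (intros; cpt; auto). apply RInt_extR; intros; ring. }
  rewrite DRInt_eq by (apply exR; intros; cpt; auto).
  rewrite RInt_sep by (intros; cpt; auto). ring.
Qed.

Lemma RInt_abs_between (g : R -> R) t h M : (forall s, continuity_pt g s) ->
  (forall s, Rmin t (t+h) <= s <= Rmax t (t+h) -> Rabs (g s) <= M) ->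
  Rabs (RInt g t (t+h)) <= Rabs h * M.
Proof.
  intros Hc Hb. destruct (Rle_dec 0 h) as [Hh|Hh].
  - rewrite (Rabs_pos_eq h) by lra.
    assert (H := abs_RInt_le_const g t (t+h) M ltac:(lra) (exR _ _ _ (fun z _ => Hc z))).
    replace (t + h - t) with h in H by ring. apply H.
    intros s Hs. apply Hb. rewrite Rmin_left by lra; rewrite Rmax_right by lra; lra.
  - rewrite (Rabs_left h) by lra.
    rewrite <- (opp_RInt_swap (V:=R_CompleteNormedModule)) by (apply exR; auto).
    change (Rabs (- RInt g (t+h) t) <= - h * M). rewrite Rabs_Ropp.
    assert (H := abs_RInt_le_const g (t+h) t M ltac:(lra) (exR _ _ _ (fun z _ => Hc z))).
    replace (t - (t + h)) with (-h) in H by ring. apply H.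
    intros s Hs. apply Hb. rewrite Rmin_right by lra; rewrite Rmax_left by lra; lra.
Qed.

Lemma cp_intro f x : (forall eps, 0 < eps -> exists del, 0 < del /\ forall y, Rabs (y - x) < del -> Rabs (f y - f x) < eps) -> continuity_pt f x.
Proof. intros H eps He. destruct (H eps He) as [del [Hd H1]]. exists del. split; auto.
  intros y [_ Hy]. apply H1. exact Hy. Qed.

Lemma chain1_sub D E : chain1 D -> chain1 E -> chain1 (fun k x => D k x - E k x).
Proof. intros HD HE k x. apply dpl_minus; auto. Qed.

Lemma chain1_scal c D : chain1 D -> chain1 (fun k x => c * D k x).
Proof. intros HD k x. apply dpl_scal; auto. Qed.

Lemma UC3 (F : nat -> R -> R -> R) a0 b0 c0 e0 eps : 0 < eps ->
  (forall k x y, (k <= 2)%nat -> a0 <= x <= b0 -> c0 <= y <= e0 -> continuity_2d_pt (F k) x y) ->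
  exists del, 0 < del /\ forall k x y u v, (k <= 2)%nat -> a0 <= x <= b0 -> c0 <= y <= e0 -> a0 <= u <= b0 -> c0 <= v <= e0 ->
    Rabs (u - x) < del -> Rabs (v - y) < del -> Rabs (F k u v - F k x y) < eps.
Proof.
  intros He H.
  destruct (uniform_continuity_2d (F 0%nat) a0 b0 c0 e0 ltac:(intros; apply H; auto) (mkposreal eps He)) as [d0 H0].
  destruct (uniform_continuity_2d (F 1%nat) a0 b0 c0 e0 ltac:(intros; apply H; auto) (mkposreal eps He)) as [d1 H1].
  destruct (uniform_continuity_2d (F 2%nat) a0 b0 c0 e0 ltac:(intros; apply H; auto) (mkposreal eps He)) as [d2 H2].
  exists (Rmin d0 (Rmin d1 d2)). split.
  - destruct d0, d1, d2; simpl. repeat apply Rmin_case; lra.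
  - assert (Rmin d0 (Rmin d1 d2) <= d0) by apply Rmin_l.
    assert (Rmin d0 (Rmin d1 d2) <= d1) by (eapply Rle_trans; [apply Rmin_r | apply Rmin_l]).
    assert (Rmin d0 (Rmin d1 d2) <= d2) by (eapply Rle_trans; [apply Rmin_r | apply Rmin_r]).
    intros k x y u v Hk; intros.
    destruct k as [|[|[|k]]]; [apply H0|apply H1|apply H2|lia]; auto; lra.
Qed.

Definition chain2 (D : nat -> nat -> R -> R -> R) :=
  (forall i j, jcont (D i j)) /\
  (forall i j x s,
      derivable_pt_lim (fun y => D i j y s) x (D (S i) j x s) /\
      derivable_pt_lim (fun t => D i j x t) s (D i (S j) x s)).

Lemma test2_chain L d : test2 L d -> exists D, D 0%nat 0%nat = d /\ chain2 D /\
  exists a b c e, 0 < a /\ a < b /\ b < L /\ 0 < c /\ c < e /\ e < 1 /\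
    forall x s, (x < a \/ b < x \/ s < c \/ e < s) -> d x s = 0.
Proof. intros [[D [H0 [H1 H2]]] H3]. exists D. repeat split; auto; apply H2. Qed.

Lemma chain2_c2 D i j x s : chain2 D -> continuity_2d_pt (D i j) x s.
Proof. intros [H _]. apply jcont_2d. apply H. Qed.

Lemma chain2_cx D i j s x : chain2 D -> continuity_pt (fun y => D i j y s) x.
Proof. intros [_ H]. apply derivable_continuous_pt. exists (D (S i) j x s). apply H. Qed.
Lemma chain2_cs D i j x s : chain2 D -> continuity_pt (fun t => D i j x t) s.
Proof. intros [_ H]. apply derivable_continuous_pt. exists (D i (S j) x s). apply H. Qed.

Section Swap.
Variable L : R.
Hypothesis HL : 0 < L.
Variable d : R -> R -> R.
Variable D : nat -> nat -> R -> R -> R.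
Hypothesis HD0 : D 0%nat 0%nat = d.
Hypothesis HD : chain2 D.
Variables a b c e : R.
Hypothesis Hab : 0 < a /\ a < b /\ b < L.
Hypothesis Hsupp : forall x s, (x < a \/ b < x \/ s < c \/ e < s) -> d x s = 0.
Variable w : R -> R.
Hypothesis Hw : forall s, continuity_pt w s.

Definition PhD (t : R) (k : nat) (x : R) := RInt (fun s => w s * D k 0%nat x s) 0 t.

Lemma PhD_chain t : chain1 (PhD t).
Proof.
  intros k x. apply is_derive_Reals. unfold PhD.
  assert (Hd : forall u s, is_derive (fun z => w s * D k 0%nat z s) u (w s * D (S k) 0%nat u s)).
  { intros u s. apply is_derive_Reals. apply dpl_scal. apply HD. }
  assert (HR := is_derive_RInt_param (fun u s => w s * D k 0%nat u s) 0 t x).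
  replace (RInt (fun s => w s * D (S k) 0%nat x s) 0 t) with
    (RInt (fun t0 => Derive (fun u => w t0 * D k 0%nat u t0) x) 0 t).
  apply HR.
  - exists (mkposreal 1 Rlt_0_1). intros y _ s _. eexists. apply Hd.
  - intros s _. apply continuity_2d_pt_ext with (f := fun u v => w v * D (S k) 0%nat u v).
    intros u v. symmetry. apply is_derive_unique. apply Hd.
    apply continuity_2d_pt_mult. apply c2_snd; auto. apply chain2_c2; auto.
  - exists (mkposreal 1 Rlt_0_1). intros y _. apply exR. intros z _. apply cp_mult; auto. apply chain2_cs; auto.
  - apply RInt_extR. intros s _. apply is_derive_unique. apply Hd.
Qed.

Lemma PhD_supp t : supp1 L (PhD t 0%nat).
Proof. exists a, b. destruct Hab as [h1 [h2 h3]]. repeat split; auto.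
  intros x Hx. unfold PhD. rewrite HD0.
  rewrite (RInt_extR _ (fun _ => 0)). rewrite RInt_constR; ring.
  intros s _. rewrite Hsupp by tauto. ring. Qed.

Lemma PhD_test t : test1 L (PhD t 0%nat).
Proof. apply (test1_intro L _ (PhD t)); auto using PhD_chain, PhD_supp. Qed.

Definition dsl (s : R) (k : nat) (x : R) := D k 0%nat x s.

Lemma dsl_chain s : chain1 (dsl s).
Proof. intros k x. apply HD. Qed.

Lemma dsl_test s : test1 L (fun x => d x s).
Proof. apply (test1_intro L _ (dsl s)). unfold dsl; rewrite HD0; reflexivity. apply dsl_chain.
  exists a, b. destruct Hab as [h1 [h2 h3]]. repeat split; auto. intros x Hx. apply Hsupp. tauto. Qed.


Section Alpha.
Variable alpha : (R -> R) -> R.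
Hypothesis Halpha : Wm22_1 L alpha.

Definition uu (s : R) := alpha (fun x => d x s).

Lemma uu_cont t : continuity_pt uu t.
Proof.
  apply cp_intro. intros eps He.
  destruct (W_bnd _ _ Halpha) as [C [C0 HC]].
  set (ep := eps / (C * sqrt (3 * L) + 1)).
  assert (Hsq : 0 <= sqrt (3 * L)) by apply sqrt_pos.
  assert (Hep : 0 < ep). { unfold ep. apply Rdiv_lt_0_compat; nra. }
  destruct (UC3 (fun k x s => D k 0%nat x s) 0 L (t-1) (t+1) ep Hep) as [del [Hdel Hu]].
  { intros. apply chain2_c2; auto. }
  exists (Rmin del 1). split. apply Rmin_case; lra.
  intros y Hy. assert (Hy1 : Rabs (y - t) < del) by (eapply Rlt_le_trans; [apply Hy|apply Rmin_l]).
  assert (Hy2 : Rabs (y - t) < 1) by (eapply Rlt_le_trans; [apply Hy|apply Rmin_r]).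
  apply Rabs_def2 in Hy2 as [? ?].
  unfold uu. rewrite <- (W_sub L alpha Halpha) by (auto using dsl_test).
  eapply Rle_lt_trans. apply HC.
  replace (fun x => d x y - d x t) with (fun x => 1 * d x y + (-1) * d x t) by (apply functional_extensionality; intro; ring).
  apply test1_lin. apply dsl_test. replace (fun x => -1 * d x t) with (fun x => -1 * d x t + 0) by (apply functional_extensionality; intro; ring).
  apply test1_lin. apply dsl_test. apply test1_zero; auto.
  apply Rle_lt_trans with (C * (sqrt (3 * L) * ep)).
  - apply Rmult_le_compat_l; auto.
    apply (H2norm1_bound L _ (fun k x => D k 0%nat x y - D k 0%nat x t) ep); auto.
    + rewrite HD0. reflexivity.
    + apply chain1_sub; apply dsl_chain.
    + intros k x Hk Hx. left. apply (Hu k x t x y Hk Hx); try lra.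
      rewrite Rminus_diag, Rabs_R0; auto.
  - assert (ep * (C * sqrt (3 * L) + 1) = eps) by (unfold ep; field; nra). nra.
Qed.


Definition Lam (t : R) := alpha (PhD t 0%nat).

Lemma Lam_der t : derivable_pt_lim Lam t (w t * uu t).
Proof.
  intros eps He.
  destruct (W_bnd _ _ Halpha) as [C [C0 HC]].
  set (ep := eps / (C * sqrt (3 * L) + 1)).
  assert (Hsq : 0 <= sqrt (3 * L)) by apply sqrt_pos.
  assert (Hep : 0 < ep). { unfold ep. apply Rdiv_lt_0_compat; nra. }
  destruct (UC3 (fun k x s => w s * D k 0%nat x s) 0 L (t-1) (t+1) ep Hep) as [del [Hdel Hu]].
  { intros. apply continuity_2d_pt_mult. apply c2_snd; auto. apply chain2_c2; auto. }
  exists (mkposreal (Rmin del 1) ltac:(apply Rmin_case; lra)). simpl.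
  intros h Hh0 Hh. assert (Hy1 : Rabs h < del) by (eapply Rlt_le_trans; [apply Hh|apply Rmin_l]).
  assert (Hy2 : Rabs h < 1) by (eapply Rlt_le_trans; [apply Hh|apply Rmin_r]).
  set (RR := fun k x => (1/h) * PhD (t+h) k x + ((-1/h) * PhD t k x + (-(w t)) * D k 0%nat x t)).
  assert (HRc : chain1 RR). { apply chain1_lin. apply PhD_chain. apply chain1_lin. apply PhD_chain.
     apply (chain1_scal _ (dsl t)). apply dsl_chain. }
  assert (Hdt : test1 L (fun x => - w t * D 0%nat 0%nat x t)).
  { apply test1_scal; auto. rewrite HD0. apply dsl_test. }
  assert (HT1 : test1 L (fun x => (-1/h) * PhD t 0%nat x + (-(w t)) * D 0%nat 0%nat x t)).
  { apply test1_lin; auto. apply PhD_test. }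
  assert (HT0 : test1 L (RR 0%nat)).
  { unfold RR. apply test1_lin; auto. apply PhD_test. }
  assert (Heq : (Lam (t + h) - Lam t) / h - w t * uu t = alpha (RR 0%nat)).
  { unfold RR, Lam, uu.
    rewrite (W_lin L alpha Halpha) by (auto using PhD_test).
    rewrite (W_lin L alpha Halpha) by (auto using PhD_test).
    assert (E3 : alpha (fun x => - w t * D 0%nat 0%nat x t) = - w t * alpha (fun x => d x t)).
    { rewrite HD0. apply (W_scal L HL alpha Halpha (fun x => d x t)). apply dsl_test. }
    rewrite E3. field. auto. }
  rewrite Heq.
  assert (Hb : forall k x, (k <= 2)%nat -> 0 <= x <= L -> Rabs (RR k x) <= ep).
  { intros k x Hk Hx.
    assert (Hg : forall s, continuity_pt (fun s => w s * D k 0%nat x s) s).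
    { intro s. apply cp_mult; auto. apply chain2_cs; auto. }
    assert (E1 : RR k x = (1/h) * RInt (fun s => w s * D k 0%nat x s - w t * D k 0%nat x t) t (t+h)).
    { unfold RR, PhD. rewrite RInt_minusR by (apply exR; intros; auto; apply cp_const).
      rewrite RInt_constR.
      rewrite <- (RInt_ChaslesR (fun s => w s * D k 0%nat x s) 0 t (t+h)) by (apply exR; auto).
      field. auto. }
    rewrite E1. rewrite Rabs_mult.
    assert (E2 := RInt_abs_between (fun s => w s * D k 0%nat x s - w t * D k 0%nat x t) t h ep).
    assert (Hh1 : 0 < Rabs h) by (apply Rabs_pos_lt; auto).
    rewrite Rabs_div by auto. rewrite Rabs_R1.
    apply Rle_trans with (1 / Rabs h * (Rabs h * ep)).
    apply Rmult_le_compat_l. left; apply Rdiv_lt_0_compat; lra.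
    apply E2. intro s. apply cp_minus; auto. apply cp_const.
    intros s Hs. left.
    assert (Hs2 : Rabs (s - t) <= Rabs h).
    { destruct (Rle_dec 0 h).
      - rewrite Rmin_left in Hs by lra. rewrite Rmax_right in Hs by lra.
        rewrite (Rabs_pos_eq h) by lra. rewrite Rabs_pos_eq by lra. lra.
      - rewrite Rmin_right in Hs by lra. rewrite Rmax_left in Hs by lra.
        rewrite (Rabs_left h) by lra. rewrite Rabs_left1 by lra. lra. }
    assert (Hs3 : Rabs (s - t) < 1) by lra.
    assert (Hs4 : Rabs (s - t) < del) by lra.
    apply Rabs_def2 in Hs3.
    apply (Hu k x t x s Hk Hx); try lra.
    rewrite Rminus_diag, Rabs_R0; auto.
    right. field. lra. }
  eapply Rle_lt_trans. apply HC; auto.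
  apply Rle_lt_trans with (C * (sqrt (3 * L) * ep)).
  - apply Rmult_le_compat_l; auto.
    apply (H2norm1_bound L _ RR ep); auto.
  - assert (ep * (C * sqrt (3 * L) + 1) = eps) by (unfold ep; field; nra). nra.
Qed.


Lemma swap_main : alpha (PhD 1 0%nat) = RInt (fun s => w s * uu s) 0 1.
Proof.
  assert (H := is_RInt_derive (V:=R_CompleteNormedModule) Lam (fun s => w s * uu s) 0 1).
  assert (H1 : is_RInt (fun s => w s * uu s) 0 1 (minus (Lam 1) (Lam 0))).
  { apply H. intros; apply is_derive_Reals; apply Lam_der.
    intros. apply continuity_pt_filterlim. apply cp_mult; auto. apply uu_cont. }
  apply (is_RInt_unique (V:=R_CompleteNormedModule)) in H1. rewrite H1.
  assert (H0 : Lam 0 = 0).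
  { unfold Lam, PhD. rewrite <- (W_zero L HL alpha Halpha). f_equal.
    apply functional_extensionality; intro x. apply RInt_pointR. }
  change (minus (Lam 1) (Lam 0)) with (Lam 1 - Lam 0). rewrite H0. unfold Lam. ring.
Qed.


Lemma swap_pack : test1 L (fun x => RInt (fun s => w s * d x s) 0 1) /\
  alpha (fun x => RInt (fun s => w s * d x s) 0 1) = RInt (fun s => w s * alpha (fun x => d x s)) 0 1 /\
  (forall s, continuity_pt (fun s => alpha (fun x => d x s)) s).
Proof.
  assert (E : PhD 1 0%nat = fun x => RInt (fun s => w s * d x s) 0 1).
  { unfold PhD. rewrite HD0. reflexivity. }
  rewrite <- E. split. apply PhD_test. split. apply swap_main. apply uu_cont.
Qed.

End Alpha.
End Swap.

Lemma swap L alpha d w : 0 < L -> Wm22_1 L alpha -> test2 L d -> (forall s, continuity_pt w s) ->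
  test1 L (fun x => RInt (fun s => w s * d x s) 0 1) /\
  alpha (fun x => RInt (fun s => w s * d x s) 0 1) = RInt (fun s => w s * alpha (fun x => d x s)) 0 1 /\
  (forall s, continuity_pt (fun s => alpha (fun x => d x s)) s).
Proof.
  intros HL Ha Hd Hw. destruct (test2_chain L d Hd) as [D [HD0 [HD [a [b [c [e [h1 [h2 [h3 [_ [_ [_ Hs]]]]]]]]]]]]].
  eapply swap_pack; eauto.
Qed.

Lemma dpl_local f g x l r : 0 < r -> (forall y, Rabs (y - x) < r -> f y = g y) ->
  derivable_pt_lim g x l -> derivable_pt_lim f x l.
Proof.
  intros Hr He Hg eps Heps. destruct (Hg eps Heps) as [del Hd].
  assert (Hm : 0 < Rmin del r) by (destruct del; simpl; apply Rmin_case; lra).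
  exists (mkposreal _ Hm). intros h Hh0 Hh. simpl in Hh.
  rewrite He. rewrite (He x). apply Hd; auto. eapply Rlt_le_trans; [apply Hh|apply Rmin_l].
  rewrite Rminus_diag, Rabs_R0; auto.
  replace (x + h - x) with h by ring. eapply Rlt_le_trans; [apply Hh|apply Rmin_r].
Qed.

Lemma trm_der (c : R) (i : nat) x : 0 < x ->
  derivable_pt_lim (fun y => c * (/y)^i * exp(-/y)) x (- INR i * c * (/x)^(S i) * exp(-/x) + c * (/x)^(S (S i)) * exp (-/x)).
Proof. intro Hx. apply is_derive_Reals. auto_derive. lra.
  destruct i. simpl. field. lra.
  change (Init.Nat.pred (S i)) with i. simpl pow. field. lra.
Qed.

Lemma powexp y n : 0 <= y -> y ^ n <= INR (Factorial.fact n) * exp y.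
Proof. intro Hy.
  assert (H := exp_ge_taylor y n Hy).
  assert (Hf : 0 < INR (Factorial.fact n)) by (apply lt_0_INR; apply Factorial.lt_O_fact).
  destruct n.
  - simpl in *. lra.
  - rewrite tech5 in H.
    assert (0 <= sum_f_R0 (fun k : nat => y ^ k / INR (Factorial.fact k)) n).
    { apply cond_pos_sum. intro k. apply Rle_mult_inv_pos. apply pow_le; auto. apply lt_0_INR; apply Factorial.lt_O_fact. }
    assert (y ^ S n / INR (Factorial.fact (S n)) <= exp y) by lra.
    apply Rmult_le_reg_r with (/ INR (Factorial.fact (S n))). apply Rinv_0_lt_compat; auto.
    replace (INR (Factorial.fact (S n)) * exp y * / INR (Factorial.fact (S n))) with (exp y) by (field; lra).
    exact H1.
Qed.

Definition trm (p : nat * R) (x : R) := snd p * (/x)^(fst p) * exp(-/x).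
Fixpoint ev (l : list (nat * R)) (x : R) : R :=
  match l with nil => 0 | p :: l' => trm p x + ev l' x end.
Definition Tl (l : list (nat * R)) : list (nat * R) :=
  flat_map (fun p => (S (fst p), - INR (fst p) * snd p) :: (S (S (fst p)), snd p) :: nil) l.

Lemma ev_app l1 l2 x : ev (l1 ++ l2) x = ev l1 x + ev l2 x.
Proof. induction l1; simpl; [ring|rewrite IHl1; ring]. Qed.

Lemma ev_der l x : 0 < x -> derivable_pt_lim (ev l) x (ev (Tl l) x).
Proof.
  intro Hx. induction l as [|[i c] l IH].
  - simpl. apply dpl_const.
  - assert (E : ev (Tl ((i,c)::l)) x = trm (S i, - INR i * c) x + trm (S (S i), c) x + ev (Tl l) x).
    { unfold Tl. simpl. ring. }
    rewrite E. change (ev ((i,c) :: l)) with (fun y => trm (i, c) y + ev l y).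
    unfold trm; simpl fst; simpl snd.
    eapply dpl_eq. apply dpl_plus. apply trm_der; auto. apply IH. ring.
Qed.

Lemma trm_bound p : exists B, 0 <= B /\ forall h, 0 < h -> Rabs (trm p h) <= B * h ^ 2.
Proof.
  destruct p as [i c]. exists (Rabs c * INR (Factorial.fact (S (S i)))). split.
  - apply Rmult_le_pos. apply Rabs_pos. apply pos_INR.
  - intros h Hh. unfold trm; simpl fst; simpl snd.
    set (y := / h). assert (Hy : 0 < y) by (apply Rinv_0_lt_compat; auto).
    assert (Hyh : y * h = 1) by (unfold y; field; lra).
    assert (P := powexp y (S (S i)) ltac:(lra)).
    assert (Hex : exp y * exp (- y) = 1) by (rewrite <- exp_plus; replace (y + - y) with 0 by ring; apply exp_0).
    assert (Hpos : 0 < exp (- y)) by apply exp_pos.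
    rewrite Rabs_mult, Rabs_mult. rewrite (Rabs_pos_eq (exp _)) by lra.
    rewrite (Rabs_pos_eq (y ^ i)) by (apply pow_le; lra).
    assert (E : y ^ i * exp (-y) = (y ^ (S (S i)) * exp (- y)) * h ^ 2).
    { simpl. replace (y * (y * y ^ i) * exp (- y) * (h * (h * 1))) with ((y * h) * (y * h) * (y ^ i * exp (-y))) by ring.
      rewrite Hyh. ring. }
    assert (E2 : y ^ (S (S i)) * exp (- y) <= INR (Factorial.fact (S (S i)))).
    { apply Rle_trans with (INR (Factorial.fact (S (S i))) * exp y * exp (- y)).
      apply Rmult_le_compat_r; lra. rewrite Rmult_assoc, Hex. lra. }
    assert (Hh2 : 0 <= h ^ 2) by (apply pow_le; lra).
    assert (E3 : y ^ i * exp (- y) <= INR (Factorial.fact (S (S i))) * h ^ 2) by (rewrite E; nra).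
    assert (0 <= Rabs c) by apply Rabs_pos.
    rewrite Rmult_assoc. rewrite (Rmult_assoc (Rabs c)). apply Rmult_le_compat_l; auto.
Qed.

Lemma ev_bound l : exists B, 0 <= B /\ forall h, 0 < h -> Rabs (ev l h) <= B * h ^ 2.
Proof.
  induction l as [|p l [B [B0 HB]]].
  - exists 0. split. lra. intros. simpl. rewrite Rabs_R0. lra.
  - destruct (trm_bound p) as [B' [B0' HB']]. exists (B' + B). split. lra.
    intros h Hh. simpl. eapply Rle_trans. apply Rabs_triang.
    specialize (HB h Hh). specialize (HB' h Hh). lra.
Qed.

Definition Gf (l : list (nat * R)) (x : R) := if Rle_dec x 0 then 0 else ev l x.

Lemma Gf_der l x : derivable_pt_lim (Gf l) x (Gf (Tl l) x).
Proof.
  destruct (Rtotal_order x 0) as [Hx|[Hx|Hx]].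
  - unfold Gf at 2. destruct (Rle_dec x 0); [|lra].
    apply (dpl_local _ (fun _ => 0) x 0 (-x)). lra.
    intros y Hy. unfold Gf. destruct (Rle_dec y 0); auto. apply Rabs_def2 in Hy. lra.
    apply dpl_const.
  - subst x. unfold Gf at 2. destruct (Rle_dec 0 0); [|lra].
    intros eps Heps. destruct (ev_bound l) as [B [B0 HB]].
    assert (Hd : 0 < eps / (B + 1)) by (apply Rdiv_lt_0_compat; lra).
    exists (mkposreal _ Hd). intros h Hh0 Hh. simpl in Hh.
    unfold Gf. destruct (Rle_dec 0 0); [|lra]. destruct (Rle_dec (0 + h) 0).
    + replace ((0 - 0) / h - 0) with 0 by (field; auto). rewrite Rabs_R0; lra.
    + replace (0 + h) with h in * by ring.
      assert (Hh1 : 0 < h) by lra. rewrite Rabs_pos_eq in Hh by lra.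
      replace ((ev l h - 0) / h - 0) with (ev l h / h) by (field; lra).
      rewrite Rabs_div by lra. rewrite (Rabs_pos_eq h) by lra.
      apply Rmult_lt_reg_r with h; auto. unfold Rdiv. rewrite Rmult_assoc, Rinv_l, Rmult_1_r by lra.
      eapply Rle_lt_trans. apply HB; auto.
      assert (h * (B + 1) < eps). { apply Rmult_lt_reg_r with (/(B+1)). apply Rinv_0_lt_compat; lra.
        rewrite Rmult_assoc, Rinv_r, Rmult_1_r by lra. exact Hh. }
      simpl. nra.
  - unfold Gf at 2. destruct (Rle_dec x 0); [lra|].
    apply (dpl_local _ (ev l) x _ x). lra.
    intros y Hy. unfold Gf. destruct (Rle_dec y 0); auto. apply Rabs_def2 in Hy. lra.
    apply ev_der; auto.
Qed.

Definition Dexp (k : nat) := Gf (Nat.iter k Tl ((0%nat, 1) :: nil)).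

Lemma Dexp_chain : chain1 Dexp.
Proof. intros k x. unfold Dexp. simpl Nat.iter. apply Gf_der. Qed.

Lemma Dexp0 x : Dexp 0%nat x = if Rle_dec x 0 then 0 else exp (-/x).
Proof. unfold Dexp, Gf. simpl. destruct (Rle_dec x 0); auto. unfold trm; simpl. ring. Qed.

Lemma chain1_aff D u v : chain1 D -> chain1 (fun k x => u ^ k * D k (u * x + v)).
Proof.
  intros HD k x.
  assert (H1 : derivable_pt_lim (fun x => u * x + v) x u).
  { eapply dpl_eq. apply dpl_plus. apply dpl_scal. apply dpl_id. apply dpl_const. ring. }
  assert (H2 := derivable_pt_lim_comp (fun x => u * x + v) (D k) x u _ H1 (HD k (u * x + v))).
  eapply dpl_eq. apply dpl_scal. exact H2. simpl. ring.
Qed.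

Fixpoint evp (F G : nat -> R -> R) (l : list (nat * nat * R)) (x : R) : R :=
  match l with nil => 0 | p :: l' => snd p * F (fst (fst p)) x * G (snd (fst p)) x + evp F G l' x end.
Definition Tp (l : list (nat * nat * R)) : list (nat * nat * R) :=
  flat_map (fun p => ((S (fst (fst p)), snd (fst p)), snd p) :: ((fst (fst p), S (snd (fst p))), snd p) :: nil) l.

Lemma evp_der F G l x : chain1 F -> chain1 G -> derivable_pt_lim (evp F G l) x (evp F G (Tp l) x).
Proof.
  intros HF HG. induction l as [|[[i j] c] l IH].
  - simpl. apply dpl_const.
  - assert (E : evp F G (Tp (((i,j),c)::l)) x = c * F (S i) x * G j x + c * F i x * G (S j) x + evp F G (Tp l) x).
    { unfold Tp. simpl. ring. }
    rewrite E. change (evp F G (((i,j),c) :: l)) with (fun y => c * F i y * G j y + evp F G l y).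
    eapply dpl_eq. apply dpl_plus. 2: apply IH.
    apply (dpl_ext (fun y => c * (F i y * G j y))). intro; ring.
    apply dpl_scal. apply dpl_mult; auto. ring.
Qed.

Definition prodD (F G : nat -> R -> R) (k : nat) := evp F G (Nat.iter k Tp (((0%nat, 0%nat), 1) :: nil)).

Lemma prodD_chain F G : chain1 F -> chain1 G -> chain1 (prodD F G).
Proof. intros HF HG k x. unfold prodD. simpl Nat.iter. apply evp_der; auto. Qed.

Lemma prodD0 F G x : prodD F G 0%nat x = F 0%nat x * G 0%nat x.
Proof. unfold prodD. simpl. ring. Qed.

Definition bumpD (p q : R) := prodD (fun k x => 1 ^ k * Dexp k (1 * x + - p)) (fun k x => (-1) ^ k * Dexp k ((-1) * x + q)).
Definition bump p q := bumpD p q 0%nat.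

Lemma bump_chain p q : chain1 (bumpD p q).
Proof. apply prodD_chain; apply chain1_aff; apply Dexp_chain. Qed.

Lemma bump_eq p q x : bump p q x = (if Rle_dec (x - p) 0 then 0 else exp (-/(x - p))) * (if Rle_dec (q - x) 0 then 0 else exp (-/(q - x))).
Proof. unfold bump, bumpD. rewrite prodD0. rewrite !Dexp0. simpl.
  replace (1 * x + - p) with (x - p) by ring. replace (-1 * x + q) with (q - x) by ring. ring. Qed.

Lemma bump_nonneg p q x : 0 <= bump p q x.
Proof. rewrite bump_eq. destruct (Rle_dec (x - p) 0); destruct (Rle_dec (q - x) 0); try lra.
  apply Rmult_le_pos; left; apply exp_pos. Qed.

Lemma bump_pos p q x : p < x < q -> 0 < bump p q x.
Proof. intro H. rewrite bump_eq. destruct (Rle_dec (x - p) 0); [lra|]. destruct (Rle_dec (q - x) 0); [lra|].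
  apply Rmult_lt_0_compat; apply exp_pos. Qed.

Lemma bump_zero p q x : (x < p \/ q < x) -> bump p q x = 0.
Proof. intro H. rewrite bump_eq. destruct (Rle_dec (x - p) 0). ring. destruct (Rle_dec (q - x) 0). ring. lra. Qed.

Lemma bump_test p q : 0 < p -> p < q -> q < 1 -> test1 1 (bump p q).
Proof. intros. apply (test1_intro 1 _ (bumpD p q)). reflexivity. apply bump_chain.
  exists p, q. repeat split; auto. intros. apply bump_zero; auto. Qed.

Lemma bump_cont p q x : continuity_pt (bump p q) x.
Proof. apply chain1_cp. apply bump_chain. Qed.

Definition clamp (s : R) := Rmax 0 (Rmin 1 s).

Lemma clamp_I01 s : I01 (clamp s).
Proof. unfold clamp, I01. split. apply Rmax_l. apply Rmax_lub. lra. apply Rmin_l. Qed.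

Lemma clamp_id s : I01 s -> clamp s = s.
Proof. intros [H1 H2]. unfold clamp. rewrite Rmin_right by lra. rewrite Rmax_right by lra. reflexivity. Qed.

Lemma clamp_lip y s : Rabs (clamp y - clamp s) <= Rabs (y - s).
Proof. unfold clamp. unfold Rmax, Rmin.
  destruct (Rle_dec 1 y); destruct (Rle_dec 1 s);
  repeat match goal with |- context[Rle_dec ?a ?b] => destruct (Rle_dec a b) end;
  unfold Rabs; repeat match goal with |- context [Rcase_abs ?a] => destruct (Rcase_abs a) end; lra. Qed.

Lemma cw_ext f : (forall x, I01 x -> cont_within01 f x) -> forall s, continuity_pt (fun s => f (clamp s)) s.
Proof. intros H s. apply cp_intro. intros eps He.
  destruct (H (clamp s) (clamp_I01 s) eps He) as [d [d0 Hd]]. exists d. split; auto.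
  intros y Hy. apply Hd. apply clamp_I01. eapply Rle_lt_trans. apply clamp_lip. auto. Qed.

Lemma dw_cw f x l : deriv_within01 f x l -> cont_within01 f x.
Proof.
  intros H eps He. destruct (H 1 Rlt_0_1) as [d [d0 Hd]].
  assert (Hl : 0 < Rabs l + 1) by (assert (0 <= Rabs l) by apply Rabs_pos; lra).
  exists (Rmin d (eps / (Rabs l + 1))). split. apply Rmin_case; auto. apply Rdiv_lt_0_compat; lra.
  intros y Hy Hyx. destruct (Req_dec y x) as [->|Hne]. rewrite Rminus_diag, Rabs_R0; auto.
  assert (Hyd : Rabs (y - x) < d) by (eapply Rlt_le_trans; [apply Hyx|apply Rmin_l]).
  assert (Hye : Rabs (y - x) < eps / (Rabs l + 1)) by (eapply Rlt_le_trans; [apply Hyx|apply Rmin_r]).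
  specialize (Hd y Hy Hne Hyd).
  assert (Hyx0 : y - x <> 0) by lra.
  assert (Hq : Rabs ((f y - f x) / (y - x)) <= Rabs l + 1).
  { replace ((f y - f x) / (y - x)) with (((f y - f x) / (y - x) - l) + l) by ring.
    eapply Rle_trans. apply Rabs_triang. lra. }
  replace (f y - f x) with ((f y - f x) / (y - x) * (y - x)) by (field; auto).
  rewrite Rabs_mult.
  assert (0 < Rabs (y - x)) by (apply Rabs_pos_lt; auto).
  apply Rle_lt_trans with ((Rabs l + 1) * Rabs (y - x)). apply Rmult_le_compat_r; lra.
  apply Rmult_lt_reg_r with (/ (Rabs l + 1)). apply Rinv_0_lt_compat; lra.
  replace ((Rabs l + 1) * Rabs (y - x) * / (Rabs l + 1)) with (Rabs (y - x)) by (field; lra). exact Hye.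
Qed.

Lemma within_int f x l : 0 < x < 1 -> deriv_within01 f x l -> derivable_pt_lim f x l.
Proof.
  intros Hx H eps He. destruct (H eps He) as [d [d0 Hd]].
  assert (Hm : 0 < Rmin d (Rmin x (1 - x))) by (repeat apply Rmin_case; lra).
  exists (mkposreal _ Hm). intros h Hh0 Hh. simpl in Hh.
  assert (H1 : Rabs h < d) by (eapply Rlt_le_trans; [apply Hh|apply Rmin_l]).
  assert (H2 : Rabs h < Rmin x (1 - x)) by (eapply Rlt_le_trans; [apply Hh|apply Rmin_r]).
  assert (H3 : Rabs h < x) by (eapply Rlt_le_trans; [apply H2|apply Rmin_l]).
  assert (H4 : Rabs h < 1 - x) by (eapply Rlt_le_trans; [apply H2|apply Rmin_r]).
  apply Rabs_def2 in H3. apply Rabs_def2 in H4.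
  assert (E := Hd (x + h) ltac:(unfold I01; lra) ltac:(lra) ltac:(replace (x + h - x) with h by ring; auto)).
  replace (x + h - x) with h in E by ring. exact E.
Qed.

Lemma dpl_locconst f x l r K : 0 < r -> (forall y, Rabs (y - x) < r -> f y = K) -> derivable_pt_lim f x l -> l = 0.
Proof. intros Hr H Hd. assert (H0 : derivable_pt_lim f x 0).
  { apply (dpl_local f (fun _ => K) x 0 r); auto. apply dpl_const. }
  eapply uniqueness_limite; eauto. Qed.

Lemma cp_elim f x : continuity_pt f x -> forall eps, 0 < eps -> exists d, 0 < d /\ forall y, Rabs (y - x) < d -> Rabs (f y - f x) < eps.
Proof. intros H eps He. destruct (H eps He) as [d [d0 Hd]]. exists d. split; auto.
  intros y Hy. destruct (Req_dec y x) as [->|Hne]. rewrite Rminus_diag, Rabs_R0; auto.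
  apply Hd. split. split. exact I. auto. exact Hy. Qed.

Lemma dpl_opp f x l : derivable_pt_lim f x l -> derivable_pt_lim (fun y => - f y) x (- l).
Proof. intro H. apply (derivable_pt_lim_opp f x l H). Qed.

Definition cg (f : R -> R) (s : R) := f (clamp s).

Lemma alg_step c1 c2 c3 a0 a1 a2 b0 b1 b2 :
  c1 * (a0 * (- b1) + b0 * a1) + c2 * a1 + c3 * b1 = 0 ->
  c1 * (a1 * (- b1) + a0 * (- b2) + (b1 * a1 + b0 * a2)) + c2 * a2 + c3 * b2 = 0 ->
  2 * a1 * a2 + 2 * b1 * b2 = 0 ->
  a1 ^ 2 + b1 ^ 2 = 1 ->
  a2 * (- b1) + b2 * a1 <> 0 ->
  c2 = - c1 * b0 /\ c3 = c1 * a0.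
Proof.
  intros E0 E1 Q S K. set (k := a2 * (- b1) + b2 * a1) in *.
  assert (Ha2 : a2 = - k * b1).
  { assert (a2 + k * b1 = a2 * (1 - (a1^2 + b1^2)) + a1 * (a1 * a2 + b1 * b2)) by (unfold k; ring).
    rewrite S in H. assert (a1 * a2 + b1 * b2 = 0) by lra. rewrite H0 in H. lra. }
  assert (Hb2 : b2 = k * a1).
  { assert (b2 - k * a1 = b2 * (1 - (a1^2 + b1^2)) + b1 * (a1 * a2 + b1 * b2)) by (unfold k; ring).
    rewrite S in H. assert (a1 * a2 + b1 * b2 = 0) by lra. rewrite H0 in H. lra. }
  assert (L2 : c3 * a1 - c2 * b1 = c1 * (a0 * a1 + b0 * b1)).
  { rewrite Ha2, Hb2 in E1.
    assert (k * (c3 * a1 - c2 * b1 - c1 * (a0 * a1 + b0 * b1)) = c1 * (a1 * (- b1) + a0 * (- (k * a1)) + (b1 * a1 + b0 * (- k * b1))) + c2 * (- k * b1) + c3 * (k * a1)) by ring.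
    rewrite E1 in H. apply Rmult_integral in H. destruct H; [contradiction|lra]. }
  assert (L1 : c2 * a1 + c3 * b1 = c1 * (a0 * b1 - b0 * a1)) by lra.
  split.
  - assert (c2 * (a1^2 + b1^2) = a1 * (c2 * a1 + c3 * b1) - b1 * (c3 * a1 - c2 * b1)) by ring.
    rewrite S, L1, L2 in H.
    assert (- c1 * b0 = - c1 * b0 * (a1 ^ 2 + b1 ^ 2)) by (rewrite S; ring). rewrite H0. lra.
  - assert (c3 * (a1^2 + b1^2) = b1 * (c2 * a1 + c3 * b1) + a1 * (c3 * a1 - c2 * b1)) by ring.
    rewrite S, L1, L2 in H.
    assert (c1 * a0 = c1 * a0 * (a1 ^ 2 + b1 ^ 2)) by (rewrite S; ring). rewrite H0. lra.
Qed.

Section Curve.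
Variables g2 g3 : nat -> R -> R.
Hypothesis Hc : admissible_curve g2 g3.

Lemma dint2 k s : (k < 6)%nat -> 0 < s < 1 -> derivable_pt_lim (g2 k) s (g2 (S k) s).
Proof. intros Hk Hs. destruct Hc as [[H _] _]. apply within_int; auto. apply H; auto. unfold I01; lra. Qed.
Lemma dint3 k s : (k < 6)%nat -> 0 < s < 1 -> derivable_pt_lim (g3 k) s (g3 (S k) s).
Proof. intros Hk Hs. destruct Hc as [_ [[H _] _]]. apply within_int; auto. apply H; auto. unfold I01; lra. Qed.

Lemma cg2_cont k s : (k < 6)%nat -> continuity_pt (cg (g2 k)) s.
Proof. intros Hk. destruct Hc as [[H _] _]. apply cw_ext. intros x Hx. eapply dw_cw. apply H; auto. Qed.
Lemma cg3_cont k s : (k < 6)%nat -> continuity_pt (cg (g3 k)) s.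
Proof. intros Hk. destruct Hc as [_ [[H _] _]]. apply cw_ext. intros x Hx. eapply dw_cw. apply H; auto. Qed.

Lemma HS s : I01 s -> g2 1%nat s ^ 2 + g3 1%nat s ^ 2 = 1.
Proof. destruct Hc as [_ [_ [H _]]]. apply H. Qed.

Lemma indep c1 c2 c3 : (forall s, 0 < s < 1 -> c1 * Nfun g2 g3 s + c2 * g2 1%nat s + c3 * g3 1%nat s = 0) ->
  c1 = 0 /\ c2 = 0 /\ c3 = 0.
Proof.
  intros Hh.
  destruct Hc as [_ [_ [_ [_ [s0 [Hs0 Hk0]]]]]].
  set (kk := fun s => cg (g2 2%nat) s * (- cg (g3 1%nat) s) + cg (g3 2%nat) s * cg (g2 1%nat) s).
  assert (Hkk0 : kk s0 = curvature g2 g3 s0).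
  { unfold kk, cg, curvature. rewrite clamp_id by auto. reflexivity. }
  assert (Hkc : continuity_pt kk s0).
  { unfold kk. cpt; first [apply cg2_cont | apply cg3_cont]; lia. }
  destruct (cp_elim kk s0 Hkc (Rabs (kk s0)) ltac:(apply Rabs_pos_lt; congruence)) as [r [r0 Hr]].
  set (rho := Rmin r (1/2) / 4).
  assert (Hrho : 0 < rho /\ 4 * rho <= r /\ 4 * rho <= 1/2).
  { unfold rho. split. apply Rdiv_lt_0_compat. apply Rmin_case; lra. lra.
    split. assert (Rmin r (1/2) <= r) by apply Rmin_l. lra. assert (Rmin r (1/2) <= 1/2) by apply Rmin_r. lra. }
  destruct Hs0 as [Hs0a Hs0b].
  set (m := if Rle_dec s0 (1/2) then s0 + 2 * rho else s0 - 2 * rho).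
  assert (Hm : forall s, Rabs (s - m) < rho -> 0 < s < 1 /\ Rabs (s - s0) < r).
  { intros s Hs. apply Rabs_def2 in Hs. unfold m in Hs. destruct (Rle_dec s0 (1/2)).
    - split. lra. apply Rabs_def1; lra.
    - split. lra. apply Rabs_def1; lra. }
  assert (Hm0 : 0 < m < 1). { apply Hm. rewrite Rminus_diag, Rabs_R0. lra. }
  assert (Key : forall s, Rabs (s - m) < rho -> c2 = - c1 * g3 0%nat s /\ c3 = c1 * g2 0%nat s).
  { intros s Hs. destruct (Hm s Hs) as [Hs01 Hss0].
    assert (Hks : curvature g2 g3 s <> 0).
    { assert (E : kk s = curvature g2 g3 s) by (unfold kk, cg, curvature; rewrite clamp_id by (unfold I01; lra); reflexivity).
      rewrite <- E. specialize (Hr s Hss0). intro Hz. rewrite Hz in Hr.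
      rewrite Rminus_0_l, Rabs_Ropp in Hr. lra. }
    assert (Hloc : forall y, Rabs (y - s) < Rmin s (1 - s) -> 0 < y < 1).
    { intros y Hy. assert (Rmin s (1 - s) <= s) by apply Rmin_l. assert (Rmin s (1 - s) <= 1 - s) by apply Rmin_r.
      apply Rabs_def2 in Hy. lra. }
    assert (Hr0 : 0 < Rmin s (1 - s)) by (apply Rmin_case; lra).
    assert (E0 := Hh s Hs01).
    assert (D1 : derivable_pt_lim (fun y => c1 * Nfun g2 g3 y + c2 * g2 1%nat y + c3 * g3 1%nat y) s
       (c1 * (g2 1%nat s * (- g3 1%nat s) + g2 0%nat s * (- g3 2%nat s) + (g3 1%nat s * g2 1%nat s + g3 0%nat s * g2 2%nat s))
        + c2 * g2 2%nat s + c3 * g3 2%nat s)).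
    { unfold Nfun. apply dpl_plus. apply dpl_plus. apply dpl_scal.
      eapply dpl_eq. apply dpl_plus; apply dpl_mult; try apply dpl_opp; first [apply dint2 | apply dint3]; auto; lia.
      cbv beta; ring. apply dpl_scal; apply dint2; auto; lia. apply dpl_scal; apply dint3; auto; lia. }
    assert (E1 := dpl_locconst _ s _ _ 0 Hr0 (fun y Hy => Hh y (Hloc y Hy)) D1).
    assert (D2 : derivable_pt_lim (fun y => g2 1%nat y ^ 2 + g3 1%nat y ^ 2) s (2 * g2 1%nat s * g2 2%nat s + 2 * g3 1%nat s * g3 2%nat s)).
    { apply (dpl_ext (fun y => g2 1%nat y * g2 1%nat y + g3 1%nat y * g3 1%nat y)). intro; ring.
      eapply dpl_eq. apply dpl_plus; apply dpl_mult; first [apply dint2 | apply dint3]; auto; lia. ring. }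
    assert (E2 := dpl_locconst _ s _ _ 1 Hr0 (fun y Hy => HS y ltac:(assert (H := Hloc y Hy); unfold I01; lra)) D2).
    apply (alg_step c1 c2 c3 (g2 0%nat s) (g2 1%nat s) (g2 2%nat s) (g3 0%nat s) (g3 1%nat s) (g3 2%nat s)); auto.
    all: try (unfold Nfun in E0; lra).
    apply HS. unfold I01; lra. }
  destruct (Req_dec c1 0) as [Hc1|Hc1].
  - destruct (Key m ltac:(rewrite Rminus_diag, Rabs_R0; lra)) as [Ha Hb]. subst c1. split; auto. split; lra.
  - exfalso.
    assert (G2 : g2 1%nat m = 0).
    { apply (dpl_locconst (g2 0%nat) m _ rho (c3 / c1)). lra.
      intros y Hy. destruct (Key y Hy) as [_ Hb]. rewrite Hb. field; auto.
      apply dint2; auto; lia. }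
    assert (G3 : g3 1%nat m = 0).
    { apply (dpl_locconst (g3 0%nat) m _ rho (- c2 / c1)). lra.
      intros y Hy. destruct (Key y Hy) as [Ha _]. rewrite Ha. field; auto.
      apply dint3; auto; lia. }
    assert (H1 := HS m ltac:(unfold I01; lra)). rewrite G2, G3 in H1. lra.
Qed.

End Curve.

Definition det3 (m11 m12 m13 m21 m22 m23 m31 m32 m33 : R) :=
  m11*(m22*m33 - m23*m32) - m12*(m21*m33 - m23*m31) + m13*(m21*m32 - m22*m31).

Lemma lin3 (X : Type) (V1 V2 V3 : X -> R) :
  (forall x y z, det3 (V1 x) (V2 x) (V3 x) (V1 y) (V2 y) (V3 y) (V1 z) (V2 z) (V3 z) = 0) ->
  exists c1 c2 c3, ~ (c1 = 0 /\ c2 = 0 /\ c3 = 0) /\ forall x, c1 * V1 x + c2 * V2 x + c3 * V3 x = 0.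
Proof.
  intros Hd.
  destruct (classic (exists x y, ~ (V2 x * V3 y - V3 x * V2 y = 0 /\ V3 x * V1 y - V1 x * V3 y = 0 /\ V1 x * V2 y - V2 x * V1 y = 0)))
    as [[x [y Hxy]]|HB].
  - exists (V2 x * V3 y - V3 x * V2 y), (V3 x * V1 y - V1 x * V3 y), (V1 x * V2 y - V2 x * V1 y). split; auto.
    intro z. rewrite <- (Hd x y z). unfold det3. ring.
  - assert (HB' : forall x y, V2 x * V3 y - V3 x * V2 y = 0 /\ V3 x * V1 y - V1 x * V3 y = 0 /\ V1 x * V2 y - V2 x * V1 y = 0).
    { intros x y. apply NNPP. intro H. apply HB. exists x, y. exact H. }
    destruct (classic (exists x, ~ (V1 x = 0 /\ V2 x = 0 /\ V3 x = 0))) as [[x Hx]|HC].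
    + destruct (classic (V2 x = 0 /\ V3 x = 0)) as [[H2 H3]|H23].
      * exists (- V3 x), 0, (V1 x). split. intros [? [? ?]]. apply Hx. repeat split; lra.
        intro z. destruct (HB' x z) as [_ [E2 _]]. lra.
      * exists 0, (V3 x), (- V2 x). split. intros [? [? ?]]. apply H23. split; lra.
        intro z. destruct (HB' x z) as [E1 _]. lra.
    + exists 1, 0, 0. split. intros [? _]; lra.
      intro z. assert (H : V1 z = 0 /\ V2 z = 0 /\ V3 z = 0).
      { apply NNPP. intro H. apply HC. exists z. exact H. }
      destruct H as [-> _]. ring.
Qed.

Definition mm (w psi : R -> R) := RInt (fun s => w s * psi s) 0 1.

Lemma choose_psi (w1 w2 w3 : R -> R) :
  (forall s, continuity_pt w1 s) -> (forall s, continuity_pt w2 s) -> (forall s, continuity_pt w3 s) ->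
  (forall c1 c2 c3, (forall s, 0 < s < 1 -> c1 * w1 s + c2 * w2 s + c3 * w3 s = 0) -> c1 = 0 /\ c2 = 0 /\ c3 = 0) ->
  exists psi1 psi2 psi3, test1 1 psi1 /\ test1 1 psi2 /\ test1 1 psi3 /\
    det3 (mm w1 psi1) (mm w2 psi1) (mm w3 psi1) (mm w1 psi2) (mm w2 psi2) (mm w3 psi2)
         (mm w1 psi3) (mm w2 psi3) (mm w3 psi3) <> 0.
Proof.
  intros Hw1 Hw2 Hw3 Hind. apply NNPP. intro Hno.
  set (X := {psi : R -> R | test1 1 psi}).
  assert (Hd : forall x y z : X, det3 (mm w1 (proj1_sig x)) (mm w2 (proj1_sig x)) (mm w3 (proj1_sig x))
     (mm w1 (proj1_sig y)) (mm w2 (proj1_sig y)) (mm w3 (proj1_sig y))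
     (mm w1 (proj1_sig z)) (mm w2 (proj1_sig z)) (mm w3 (proj1_sig z)) = 0).
  { intros [x Hx] [y Hy] [z Hz]. simpl. apply NNPP. intro H. apply Hno. exists x, y, z. auto. }
  destruct (lin3 X (fun x => mm w1 (proj1_sig x)) (fun x => mm w2 (proj1_sig x)) (fun x => mm w3 (proj1_sig x)) Hd)
    as [c1 [c2 [c3 [Hnz Hc]]]].
  apply Hnz. apply Hind. intros s0 Hs0.
  set (h := fun s => c1 * w1 s + c2 * w2 s + c3 * w3 s).
  change (h s0 = 0). apply NNPP. intro Hh0.
  assert (Hhc : forall s, continuity_pt h s) by (intro s; unfold h; cpt; auto).
  assert (Hint : forall psi, test1 1 psi -> RInt (fun s => h s * psi s) 0 1 = 0).
  { intros psi Hpsi. assert (Hpc : forall s, continuity_pt psi s).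
    { destruct (test1_chain _ _ Hpsi) as [D [D0 [HD _]]]. subst psi. intro; apply chain1_cp; auto. }
    transitivity (c1 * mm w1 psi + c2 * mm w2 psi + c3 * mm w3 psi). 2: apply (Hc (exist _ psi Hpsi)).
    unfold mm, h.
    rewrite <- !RInt_scalR by (apply exR; intros; cpt; auto).
    rewrite <- !RInt_plusR by (apply exR; intros; cpt; auto).
    apply RInt_extR. intros; ring. }
  set (sg := h s0).
  assert (Hsg : 0 < sg * sg) by (assert (sg <> 0) by auto; nra).
  destruct (cp_elim h s0 (Hhc s0) (Rabs sg / 2) ltac:(assert (0 < Rabs sg) by (apply Rabs_pos_lt; auto); lra)) as [r [r0 Hr]].
  set (r' := Rmin r (Rmin s0 (1 - s0)) / 2).
  assert (Hr' : 0 < r' /\ r' < r /\ r' < s0 /\ r' < 1 - s0).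
  { unfold r'. assert (Rmin r (Rmin s0 (1 - s0)) <= r) by apply Rmin_l.
    assert (Rmin r (Rmin s0 (1 - s0)) <= Rmin s0 (1 - s0)) by apply Rmin_r.
    assert (Rmin s0 (1 - s0) <= s0) by apply Rmin_l. assert (Rmin s0 (1 - s0) <= 1 - s0) by apply Rmin_r.
    assert (0 < Rmin r (Rmin s0 (1 - s0))) by (repeat apply Rmin_case; lra). lra. }
  set (p := s0 - r'). set (q := s0 + r').
  assert (Hb := bump_test p q ltac:(unfold p; lra) ltac:(unfold p, q; lra) ltac:(unfold q; lra)).
  assert (H0 := Hint _ Hb).
  assert (Hpos : forall s, p <= s <= q -> 0 < sg * h s).
  { intros s Hs. assert (Hd' : Rabs (s - s0) < r) by (apply Rabs_def1; unfold p, q in Hs; lra).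
    specialize (Hr s Hd'). fold sg in Hr.
    unfold Rabs in Hr. destruct (Rcase_abs (h s - sg)); destruct (Rcase_abs sg); nra. }
  assert (Hbc := bump_cont p q).
  assert (Hex : forall a b, ex_RInt (fun s => sg * (h s * bump p q s)) a b) by (intros; apply exR; intros; apply cp_mult; [apply cp_const| apply cp_mult; auto]).
  assert (Hgt : 0 < RInt (fun s => sg * (h s * bump p q s)) p q).
  { apply RInt_gt_0. unfold p, q; lra.
    intros x Hx. replace (sg * (h x * bump p q x)) with ((sg * h x) * bump p q x) by ring.
    apply Rmult_lt_0_compat. apply Hpos; lra. apply bump_pos; auto.
    intros x _. apply continuity_pt_filterlim. apply cp_mult; [apply cp_const| apply cp_mult; auto]. }
  assert (Hge1 : 0 <= RInt (fun s => sg * (h s * bump p q s)) 0 p).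
  { apply RInt_ge_0. unfold p; lra. auto. intros x Hx. rewrite bump_zero by lra. lra. }
  assert (Hge2 : 0 <= RInt (fun s => sg * (h s * bump p q s)) q 1).
  { apply RInt_ge_0. unfold q; lra. auto. intros x Hx. rewrite bump_zero by lra. lra. }
  assert (T : RInt (fun s => sg * (h s * bump p q s)) 0 1 = 0).
  { rewrite RInt_scalR. rewrite H0; apply Rmult_0_r. apply exR; intros; apply cp_mult; auto. }
  rewrite <- (RInt_ChaslesR _ 0 p 1) in T by auto. rewrite <- (RInt_ChaslesR _ p q 1) in T by auto. lra.
Qed.

Lemma DRInt_ext01 (f g : R -> R) : (forall s, continuity_pt g s) -> (forall s, 0 < s < 1 -> f s = g s) ->
  Defs.RInt f 0 1 = RInt g 0 1.
Proof. intros Hg Hfg.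
  assert (Hmm : forall x, Rmin 0 1 < x < Rmax 0 1 -> 0 < x < 1).
  { intros x. rewrite Rmin_left, Rmax_right by lra. auto. }
  rewrite DRInt_eq. apply RInt_extR. intros x Hx. apply Hfg; auto.
  apply (ex_RInt_extR g). intros x Hx. symmetry. apply Hfg; auto. apply exR; auto. Qed.

Definition ext01 (beta w : R -> R) := (forall s, continuity_pt w s) /\ (forall s, I01 s -> beta s = w s).

Lemma embed_tens L alpha beta w phi psi : 0 < L -> ext01 beta w -> Wm22_1 L alpha -> test1 L phi -> test1 1 psi ->
  embed alpha beta (tens phi psi) = alpha phi * mm w psi.
Proof.
  intros HL [Hw Hbw] Ha Hp Hq. unfold embed, tens, mm.
  assert (Hqc : forall s, continuity_pt psi s).
  { destruct (test1_chain _ _ Hq) as [E [E0 [HE _]]]. subst psi. intro; apply chain1_cp; auto. }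
  rewrite (DRInt_ext01 _ (fun s => alpha phi * (w s * psi s))).
  - apply RInt_scalR. apply exR; intros; apply cp_mult; auto.
  - intros; apply cp_mult; [apply cp_const|apply cp_mult; auto].
  - intros s Hs. rewrite Hbw by (unfold I01; lra).
    replace (fun x => phi x * psi s) with (fun x => psi s * phi x) by (apply functional_extensionality; intro; ring).
    rewrite (W_scal L HL alpha Ha phi (psi s) Hp). ring.
Qed.

Lemma embed_swap L alpha beta w d : 0 < L -> ext01 beta w -> Wm22_1 L alpha -> test2 L d ->
  embed alpha beta d = alpha (fun x => RInt (fun s => w s * d x s) 0 1).
Proof.
  intros HL [Hw Hbw] Ha Hd. destruct (swap L alpha d w HL Ha Hd Hw) as [_ [E Hc]].
  rewrite E. unfold embed. apply DRInt_ext01.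
  intro; apply cp_mult; auto.
  intros s Hs. rewrite Hbw by (unfold I01; lra). reflexivity.
Qed.

Lemma H2norm1_zero L phi : H2norm1 L (fun x => phi x - phi x) = 0.
Proof.
  replace (fun x => phi x - phi x) with (fun _ : R => 0) by (apply functional_extensionality; intro; ring).
  unfold H2norm1.
  assert (Ed : der (fun _ : R => 0) = fun _ => 0) by (apply der_fun; intro; apply dpl_const).
  rewrite Ed, Ed.
  rewrite DRInt_eq by (apply exR; intros; cpt).
  rewrite (RInt_extR _ (fun _ => 0)) by (intros; simpl; ring).
  rewrite RInt_constR. replace ((L - 0) * 0) with 0 by ring. apply sqrt_0.
Qed.

Lemma H2norm2_zero L d : H2norm2 L (fun x s => d x s - d x s) = 0.
Proof.
  replace (fun x s => d x s - d x s) with (fun _ _ : R => 0) by (do 2 (apply functional_extensionality; intro); ring).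
  unfold H2norm2.
  assert (Ex : dx (fun _ _ : R => 0) = fun _ _ => 0).
  { unfold dx. do 2 (apply functional_extensionality; intro). apply der_eq. apply dpl_const. }
  assert (Es : ds (fun _ _ : R => 0) = fun _ _ => 0).
  { unfold ds. do 2 (apply functional_extensionality; intro). apply der_eq. apply dpl_const. }
  rewrite Es, Ex, Ex, Es.
  unfold Int2.
  replace (fun s : R => Defs.RInt (fun x : R => 0 ^ 2 + 0 ^ 2 + 0 ^ 2 + 0 ^ 2 + 0 ^ 2 + 0 ^ 2) 0 L) with (fun _ : R => 0).
  rewrite DRInt_eq by (apply exR; intros; cpt).
  rewrite RInt_constR. replace ((1 - 0) * 0) with 0 by ring. apply sqrt_0.
  apply functional_extensionality; intro s.
  rewrite DRInt_eq by (apply exR; intros; cpt).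
  rewrite (RInt_extR _ (fun _ => 0)) by (intros; simpl; ring).
  rewrite RInt_constR. ring.
Qed.

Lemma cv_const (c : R) : Un_cv (fun _ => c) c.
Proof. intros eps He. exists 0%nat. intros. unfold R_dist. rewrite Rminus_diag, Rabs_R0; auto. Qed.

Lemma cv_ext u v l : (forall n, u n = v n) -> Un_cv u l -> Un_cv v l.
Proof. intros H. replace v with u; auto. apply functional_extensionality; auto. Qed.

Lemma cv_eq u l l' : Un_cv u l -> l = l' -> Un_cv u l'.
Proof. intros H <-; auto. Qed.

Lemma cv_lin3 u1 u2 u3 l1 l2 l3 x1 x2 x3 : Un_cv u1 l1 -> Un_cv u2 l2 -> Un_cv u3 l3 ->
  Un_cv (fun n => x1 * u1 n + x2 * u2 n + x3 * u3 n) (x1 * l1 + x2 * l2 + x3 * l3).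
Proof. intros H1 H2 H3.
  apply CV_plus. apply CV_plus.
  apply (CV_mult (fun _ => x1) u1); auto using cv_const.
  apply (CV_mult (fun _ => x2) u2); auto using cv_const.
  apply (CV_mult (fun _ => x3) u3); auto using cv_const.
Qed.

Lemma deriv_test1 psi D : test1 1 psi -> D 0%nat = psi -> chain1 D -> test1 1 (D 1%nat).
Proof.
  intros Hp HD0 HD. destruct (test1_chain _ _ Hp) as [_ [_ [_ [a [b [h1 [h2 [h3 h4]]]]]]]].
  apply (test1_intro 1 _ (fun k => D (S k))); auto. apply chain1_shift; auto.
  exists a, b. repeat split; auto. intros x Hx. destruct Hx as [Hx|Hx].
  - apply (dpl_locconst (D 0%nat) x _ (a - x) 0). lra.
    intros y Hy. rewrite HD0. apply h4. apply Rabs_def2 in Hy. lra. apply HD.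
  - apply (dpl_locconst (D 0%nat) x _ (x - b) 0). lra.
    intros y Hy. rewrite HD0. apply h4. apply Rabs_def2 in Hy. lra. apply HD.
Qed.

Definition comb (f : (R -> R -> R) -> R) (p1 p2 p3 : R -> R) (x1 x2 x3 : R) (phi : R -> R) :=
  x1 * f (tens phi p1) + x2 * f (tens phi p2) + x3 * f (tens phi p3).

Lemma W2_bnd L f : Wm22_2 L f -> exists C, 0 <= C /\ forall d, test2 L d -> Rabs (f d) <= C * H2norm2 L d.
Proof. intros [_ [C HC]]. exists (Rmax C 0). split. apply Rmax_r.
  intros d Hd. apply Rle_trans with (C * H2norm2 L d). auto.
  apply Rmult_le_compat_r. apply sqrt_pos. apply Rmax_l. Qed.

Lemma tens_lin phi psi chi c : tens (fun x => c * phi x + psi x) chi = (fun x s => c * tens phi chi x s + tens psi chi x s).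
Proof. unfold tens. do 2 (apply functional_extensionality; intro). ring. Qed.

Lemma comb_W1 L f p1 p2 p3 x1 x2 x3 : 0 < L -> Wm22_2 L f -> test1 1 p1 -> test1 1 p2 -> test1 1 p3 ->
  Wm22_1 L (comb f p1 p2 p3 x1 x2 x3).
Proof.
  intros HL Hf H1 H2 H3. split.
  - intros phi psi c Hphi Hpsi. unfold comb. rewrite !tens_lin.
    destruct Hf as [Hl _]. rewrite !Hl by (apply test2_tens; auto). ring.
  - destruct (W2_bnd L f Hf) as [C [C0 HC]].
    exists (C * (Rabs x1 * H2norm1 1 p1 + Rabs x2 * H2norm1 1 p2 + Rabs x3 * H2norm1 1 p3)).
    intros phi Hphi. unfold comb.
    assert (B : forall x p, test1 1 p -> Rabs (x * f (tens phi p)) <= Rabs x * C * H2norm1 1 p * H2norm1 L phi).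
    { intros x p Hp. rewrite Rabs_mult. rewrite !Rmult_assoc. apply Rmult_le_compat_l. apply Rabs_pos.
      eapply Rle_trans. apply HC. apply test2_tens; auto.
      apply Rmult_le_compat_l; auto. apply H2norm2_tens_bound; auto. }
    eapply Rle_trans. apply Rabs_triang. eapply Rle_trans. apply Rplus_le_compat_r. apply Rabs_triang.
    specialize (B x2 p2 H2) as B2. specialize (B x3 p3 H3) as B3. specialize (B x1 p1 H1).
    lra.
Qed.

Lemma test1_cont L phi : test1 L phi -> forall x, continuity_pt phi x.
Proof. intros H x. destruct (test1_chain _ _ H) as [D [D0 [HD _]]]. subst phi. apply chain1_cp; auto. Qed.

Lemma comb_L2 L f G p1 p2 p3 x1 x2 x3 : 0 < L -> L2fun2 L G -> (forall d, test2 L d -> f d = - G (ds d)) ->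
  test1 1 p1 -> test1 1 p2 -> test1 1 p3 -> L2dist1 L (comb f p1 p2 p3 x1 x2 x3).
Proof.
  intros HL [_ [CG HCG]] HfG H1 H2 H3.
  set (CG' := Rmax CG 0).
  assert (HCG' : forall d, test2 L d -> Rabs (G d) <= CG' * L2norm2 L d).
  { intros d Hd. apply Rle_trans with (CG * L2norm2 L d). auto.
    apply Rmult_le_compat_r. apply sqrt_pos. apply Rmax_l. }
  assert (C0 : 0 <= CG') by apply Rmax_r.
  assert (K : forall p, test1 1 p -> exists chi, test1 1 chi /\ forall phi, test1 L phi -> Rabs (f (tens phi p)) <= CG' * L2norm1 1 chi * L2norm1 L phi).
  { intros p Hp. destruct (test1_chain _ _ Hp) as [E [E0 [HE _]]].
    exists (E 1%nat). split. apply (deriv_test1 p E); auto.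
    intros phi Hphi. rewrite HfG by (apply test2_tens; auto). rewrite (ds_tens phi p E HE E0).
    rewrite Rabs_Ropp. eapply Rle_trans. apply HCG'. apply test2_tens; auto. apply (deriv_test1 p E); auto.
    rewrite L2norm2_tens; auto. right; ring.
    apply test1_cont with L; auto. intro; apply chain1_cp; auto. }
  destruct (K p1 H1) as [c1 [_ K1]]. destruct (K p2 H2) as [c2 [_ K2]]. destruct (K p3 H3) as [c3 [_ K3]].
  exists (Rabs x1 * CG' * L2norm1 1 c1 + Rabs x2 * CG' * L2norm1 1 c2 + Rabs x3 * CG' * L2norm1 1 c3).
  intros phi Hphi. unfold comb.
  specialize (K1 phi Hphi). specialize (K2 phi Hphi). specialize (K3 phi Hphi).
  assert (B : forall x y M, Rabs y <= M -> Rabs (x * y) <= Rabs x * M).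
  { intros x y M Hy. rewrite Rabs_mult. apply Rmult_le_compat_l; auto. apply Rabs_pos. }
  apply B with (x := x1) in K1. apply B with (x := x2) in K2. apply B with (x := x3) in K3.
  eapply Rle_trans. apply Rabs_triang. eapply Rle_trans. apply Rplus_le_compat_r. apply Rabs_triang.
  lra.
Qed.

Lemma W22_tens L Phi p : 0 < L -> W22_0_1 L Phi -> test1 1 p -> W22_0_2 L (fun n => tens (Phi n) p).
Proof.
  intros HL [HT HC] Hp. split. intro n. apply test2_tens; auto.
  intros eps He. set (K := H2norm1 1 p).
  assert (K0 : 0 <= K) by apply sqrt_pos.
  destruct (HC (eps / (K + 1))) as [N HN]. apply Rdiv_lt_0_compat; lra.
  exists N. intros m n Hm Hn.
  replace (fun x s => tens (Phi m) p x s - tens (Phi n) p x s) with (tens (fun x => 1 * Phi m x + (-1) * Phi n x) p)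
    by (unfold tens; do 2 (apply functional_extensionality; intro); ring).
  assert (Ht : test1 L (fun x => 1 * Phi m x + (-1) * Phi n x)).
  { apply test1_lin; auto. apply test1_scal; auto. }
  eapply Rle_lt_trans. apply H2norm2_tens_bound; auto.
  replace (fun x => 1 * Phi m x + -1 * Phi n x) with (fun x => Phi m x - Phi n x) by (apply functional_extensionality; intro; ring).
  specialize (HN m n Hm Hn). fold K.
  assert (0 <= H2norm1 L (fun x => Phi m x - Phi n x)) by apply sqrt_pos.
  assert ((K + 1) * (eps / (K + 1)) = eps) by (field; lra).
  apply Rle_lt_trans with ((K + 1) * H2norm1 L (fun x => Phi m x - Phi n x)). nra.
  apply Rlt_le_trans with ((K + 1) * (eps / (K + 1))). apply Rmult_lt_compat_l; lra. lra.
Qed.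

Lemma lim_of L a Phi : Wm22_1 L a -> W22_0_1 L Phi -> Un_cv (fun n => a (Phi n)) (epsilon (inhabits 0) (fun l => Un_cv (fun n => a (Phi n)) l)).
Proof. intros Ha HP. apply epsilon_spec. apply W_cauchy with L; auto. Qed.

Theorem mainTheorem3
  (L : R) (HL : 0 < L)
  (g2 g3 : nat -> R -> R) (Hcurve : admissible_curve g2 g3)
  (a1 a2 a3 : nat -> (R -> R) -> R)
  (Ha1 : forall h, Wm22_1 L (a1 h))
  (Ha2 : forall h, Wm22_1 L (a2 h))
  (Ha3 : forall h, Wm22_1 L (a3 h))
  (f : (R -> R -> R) -> R) (Hf : Wm22_2 L f)
  (Hcv : weak_cv2 L
     (fun h d => embed (a1 h) (Nfun g2 g3) d + embed (a2 h) (tau2 g2) d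
                 + embed (a3 h) (tau3 g3) d) f) :
  exists b1 b2 b3 : (R -> R) -> R,
    Wm22_1 L b1 /\ Wm22_1 L b2 /\ Wm22_1 L b3 /\
    weak_cv1 L a1 b1 /\ weak_cv1 L a2 b2 /\ weak_cv1 L a3 b3 /\
    (forall d, test2 L d ->
       f d = embed b1 (Nfun g2 g3) d + embed b2 (tau2 g2) d + embed b3 (tau3 g3) d) /\
    ((exists G, L2fun2 L G /\ forall d, test2 L d -> f d = - G (ds d)) ->
       L2dist1 L b1 /\ L2dist1 L b2 /\ L2dist1 L b3) /\
    ((forall d, test2 L d -> f d = 0) ->
       (forall phi, test1 L phi -> b1 phi = 0) /\
       (forall phi, test1 L phi -> b2 phi = 0) /\
       (forall phi, test1 L phi -> b3 phi = 0)).
Proof.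
  set (w1 := fun s => cg (g2 0%nat) s * (- cg (g3 1%nat) s) + cg (g3 0%nat) s * cg (g2 1%nat) s).
  set (w2 := cg (g2 1%nat)). set (w3 := cg (g3 1%nat)).
  assert (Hw1 : forall s, continuity_pt w1 s).
  { intro s. unfold w1. cpt; first [apply (cg2_cont g2 g3 Hcurve) | apply (cg3_cont g2 g3 Hcurve)]; lia. }
  assert (Hw2 : forall s, continuity_pt w2 s) by (intro; apply (cg2_cont g2 g3 Hcurve); lia).
  assert (Hw3 : forall s, continuity_pt w3 s) by (intro; apply (cg3_cont g2 g3 Hcurve); lia).
  assert (E1 : ext01 (Nfun g2 g3) w1).
  { split; auto. intros s Hs. unfold w1, cg, Nfun. rewrite clamp_id by auto. reflexivity. }
  assert (E2 : ext01 (tau2 g2) w2).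
  { split; auto. intros s Hs. unfold w2, cg, tau2. rewrite clamp_id by auto. reflexivity. }
  assert (E3 : ext01 (tau3 g3) w3).
  { split; auto. intros s Hs. unfold w3, cg, tau3. rewrite clamp_id by auto. reflexivity. }
  assert (Hind : forall c1 c2 c3, (forall s, 0 < s < 1 -> c1 * w1 s + c2 * w2 s + c3 * w3 s = 0) -> c1 = 0 /\ c2 = 0 /\ c3 = 0).
  { intros c1 c2 c3 H. apply (indep g2 g3 Hcurve). intros s Hs.
    destruct E1 as [_ e1]. destruct E2 as [_ e2]. destruct E3 as [_ e3].
    assert (I : I01 s) by (unfold I01; lra).
    change (c1 * Nfun g2 g3 s + c2 * tau2 g2 s + c3 * tau3 g3 s = 0).
    rewrite e1, (e2 s I), (e3 s I) by auto. apply H; auto. }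
  destruct (choose_psi w1 w2 w3 Hw1 Hw2 Hw3 Hind) as [p1 [p2 [p3 [Hp1 [Hp2 [Hp3 Hdet]]]]]].
  set (m11 := mm w1 p1). set (m12 := mm w2 p1). set (m13 := mm w3 p1).
  set (m21 := mm w1 p2). set (m22 := mm w2 p2). set (m23 := mm w3 p2).
  set (m31 := mm w1 p3). set (m32 := mm w2 p3). set (m33 := mm w3 p3).
  set (dt := det3 m11 m12 m13 m21 m22 m23 m31 m32 m33) in Hdet.
  set (i11 := (m22 * m33 - m23 * m32) / dt). set (i12 := (m13 * m32 - m12 * m33) / dt). set (i13 := (m12 * m23 - m13 * m22) / dt).
  set (i21 := (m23 * m31 - m21 * m33) / dt). set (i22 := (m11 * m33 - m13 * m31) / dt). set (i23 := (m13 * m21 - m11 * m23) / dt).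
  set (i31 := (m21 * m32 - m22 * m31) / dt). set (i32 := (m12 * m31 - m11 * m32) / dt). set (i33 := (m11 * m22 - m12 * m21) / dt).
  set (b1 := comb f p1 p2 p3 i11 i12 i13).
  set (b2 := comb f p1 p2 p3 i21 i22 i23).
  set (b3 := comb f p1 p2 p3 i31 i32 i33).
  assert (Hb1 : Wm22_1 L b1) by (apply comb_W1; auto).
  assert (Hb2 : Wm22_1 L b2) by (apply comb_W1; auto).
  assert (Hb3 : Wm22_1 L b3) by (apply comb_W1; auto).
  set (Fs := fun h d => embed (a1 h) (Nfun g2 g3) d + embed (a2 h) (tau2 g2) d + embed (a3 h) (tau3 g3) d).
  assert (KA : forall h phi p, test1 L phi -> test1 1 p ->
     Fs h (tens phi p) = mm w1 p * a1 h phi + mm w2 p * a2 h phi + mm w3 p * a3 h phi).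
  { intros h phi p Hphi Hp. unfold Fs.
    rewrite (embed_tens L (a1 h) _ w1), (embed_tens L (a2 h) _ w2), (embed_tens L (a3 h) _ w3); auto. ring. }
  assert (Hdt : dt <> 0) by exact Hdet.
  assert (KB1 : forall phi, f (tens phi p1) = m11 * b1 phi + m12 * b2 phi + m13 * b3 phi).
  { intro phi. unfold b1, b2, b3, comb, i11, i12, i13, i21, i22, i23, i31, i32, i33.
    unfold dt, det3 in *. field. auto. }
  assert (KB2 : forall phi, f (tens phi p2) = m21 * b1 phi + m22 * b2 phi + m23 * b3 phi).
  { intro phi. unfold b1, b2, b3, comb, i11, i12, i13, i21, i22, i23, i31, i32, i33.
    unfold dt, det3 in *. field. auto. }
  assert (KB3 : forall phi, f (tens phi p3) = m31 * b1 phi + m32 * b2 phi + m33 * b3 phi).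
  { intro phi. unfold b1, b2, b3, comb, i11, i12, i13, i21, i22, i23, i31, i32, i33.
    unfold dt, det3 in *. field. auto. }
  assert (WC : forall Phi, W22_0_1 L Phi -> forall A1 A2 A3 B1 B2 B3,
    (forall h, Un_cv (fun n => a1 h (Phi n)) (A1 h)) -> (forall h, Un_cv (fun n => a2 h (Phi n)) (A2 h)) ->
    (forall h, Un_cv (fun n => a3 h (Phi n)) (A3 h)) ->
    Un_cv (fun n => b1 (Phi n)) B1 -> Un_cv (fun n => b2 (Phi n)) B2 -> Un_cv (fun n => b3 (Phi n)) B3 ->
    Un_cv A1 B1 /\ Un_cv A2 B2 /\ Un_cv A3 B3).
  { intros Phi HP A1 A2 A3 B1 B2 B3 HA1 HA2 HA3 HB1 HB2 HB3.
    assert (Y : forall p, test1 1 p -> (forall phi, f (tens phi p) = mm w1 p * b1 phi + mm w2 p * b2 phi + mm w3 p * b3 phi) ->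
       Un_cv (fun h => mm w1 p * A1 h + mm w2 p * A2 h + mm w3 p * A3 h) (mm w1 p * B1 + mm w2 p * B2 + mm w3 p * B3)).
    { intros p Hp Kp. apply (Hcv (fun n => tens (Phi n) p) (W22_tens L Phi p HL HP Hp)).
      - intro h. apply cv_ext with (fun n => mm w1 p * a1 h (Phi n) + mm w2 p * a2 h (Phi n) + mm w3 p * a3 h (Phi n)).
        intro n. symmetry. apply (KA h (Phi n) p). destruct HP as [HT _]; auto. auto.
        apply cv_lin3; auto.
      - apply cv_ext with (fun n => mm w1 p * b1 (Phi n) + mm w2 p * b2 (Phi n) + mm w3 p * b3 (Phi n)).
        intro n. symmetry. apply Kp. apply cv_lin3; auto. }
    assert (Y1 := Y p1 Hp1 KB1). assert (Y2 := Y p2 Hp2 KB2). assert (Y3 := Y p3 Hp3 KB3).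
    fold m11 m12 m13 m21 m22 m23 m31 m32 m33 in Y1, Y2, Y3.
    assert (Z := fun x1 x2 x3 => cv_lin3 _ _ _ _ _ _ x1 x2 x3 Y1 Y2 Y3).
    repeat split.
    - eapply cv_eq. apply cv_ext with (2 := Z i11 i12 i13).
      intro h. unfold i11, i12, i13, dt, det3 in *. field. auto.
      unfold i11, i12, i13, dt, det3 in *. field. auto.
    - eapply cv_eq. apply cv_ext with (2 := Z i21 i22 i23).
      intro h. unfold i21, i22, i23, dt, det3 in *. field. auto.
      unfold i21, i22, i23, dt, det3 in *. field. auto.
    - eapply cv_eq. apply cv_ext with (2 := Z i31 i32 i33).
      intro h. unfold i31, i32, i33, dt, det3 in *. field. auto.
      unfold i31, i32, i33, dt, det3 in *. field. auto. }
  set (lim := fun (a : (R -> R) -> R) (Phi : nat -> R -> R) => epsilon (inhabits 0) (fun l => Un_cv (fun n => a (Phi n)) l)).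
  assert (Wk1 : weak_cv1 L a1 b1).
  { intros Phi HP vs v Hvs Hv.
    destruct (WC Phi HP vs (fun h => lim (a2 h) Phi) (fun h => lim (a3 h) Phi) v (lim b2 Phi) (lim b3 Phi)) as [H _]; auto.
    intro h; apply lim_of with L; auto. intro h; apply lim_of with L; auto.
    apply lim_of with L; auto. apply lim_of with L; auto. }
  assert (Wk2 : weak_cv1 L a2 b2).
  { intros Phi HP vs v Hvs Hv.
    destruct (WC Phi HP (fun h => lim (a1 h) Phi) vs (fun h => lim (a3 h) Phi) (lim b1 Phi) v (lim b3 Phi)) as [_ [H _]]; auto.
    intro h; apply lim_of with L; auto. intro h; apply lim_of with L; auto.
    apply lim_of with L; auto. apply lim_of with L; auto. }
  assert (Wk3 : weak_cv1 L a3 b3).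
  { intros Phi HP vs v Hvs Hv.
    destruct (WC Phi HP (fun h => lim (a1 h) Phi) (fun h => lim (a2 h) Phi) vs (lim b1 Phi) (lim b2 Phi) v) as [_ [_ H]]; auto.
    intro h; apply lim_of with L; auto. intro h; apply lim_of with L; auto.
    apply lim_of with L; auto. apply lim_of with L; auto. }
  exists b1, b2, b3. split; [auto|]. split; [auto|]. split; [auto|].
  split; [auto|]. split; [auto|]. split; [auto|].
  split; [|split].
  - intros d Hd.
    destruct (swap L b1 d w1 HL Hb1 Hd Hw1) as [T1 _].
    destruct (swap L b1 d w2 HL Hb1 Hd Hw2) as [T2 _].
    destruct (swap L b1 d w3 HL Hb1 Hd Hw3) as [T3 _].
    set (P1 := fun x => RInt (fun s => w1 s * d x s) 0 1) in *.
    set (P2 := fun x => RInt (fun s => w2 s * d x s) 0 1) in *.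
    set (P3 := fun x => RInt (fun s => w3 s * d x s) 0 1) in *.
    assert (Wc : forall P, test1 L P -> W22_0_1 L (fun _ => P)).
    { intros P HP. split. intro; auto. intros eps He. exists 0%nat. intros. rewrite H2norm1_zero. auto. }
    assert (C1 : Un_cv (fun h => a1 h P1) (b1 P1)).
    { apply (Wk1 (fun _ => P1) (Wc P1 T1)). intro; apply cv_const. apply cv_const. }
    assert (C2 : Un_cv (fun h => a2 h P2) (b2 P2)).
    { apply (Wk2 (fun _ => P2) (Wc P2 T2)). intro; apply cv_const. apply cv_const. }
    assert (C3 : Un_cv (fun h => a3 h P3) (b3 P3)).
    { apply (Wk3 (fun _ => P3) (Wc P3 T3)). intro; apply cv_const. apply cv_const. }
    assert (Cf : Un_cv (fun h => Fs h d) (f d)).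
    { apply (Hcv (fun _ => d)).
      split. intro; auto. intros eps He. exists 0%nat. intros. rewrite H2norm2_zero. auto.
      intro; apply cv_const. apply cv_const. }
    assert (Cs : Un_cv (fun h => Fs h d) (1 * b1 P1 + 1 * b2 P2 + 1 * b3 P3)).
    { apply cv_ext with (2 := cv_lin3 _ _ _ _ _ _ 1 1 1 C1 C2 C3).
      intro h. unfold Fs. rewrite (embed_swap L (a1 h) _ w1 d), (embed_swap L (a2 h) _ w2 d), (embed_swap L (a3 h) _ w3 d); auto.
      fold P1 P2 P3. ring. }
    rewrite (UL_sequence _ _ _ Cf Cs).
    rewrite (embed_swap L b1 _ w1 d), (embed_swap L b2 _ w2 d), (embed_swap L b3 _ w3 d); auto.
    fold P1 P2 P3. ring.
  - intros [G [HG HfG]]. repeat split; apply comb_L2 with G; auto.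
  - intros H0. repeat split; intros phi Hphi; unfold b1, b2, b3, comb;
      rewrite !H0 by (apply test2_tens; auto); ring.
Qed.
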